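(* Let $s>0$. There exist $\delta=\delta(s)>0$ and $C=C(s)$ such that for all $M\ge1$, $T>0$ and $\omega,\tilde\omega\in C([0,T];\ell^2_s(\mathbb Z))$, $$\|\mathcal N_0[\omega]\|_{C_T\ell^2_s}\le CM^{-\delta}\|\omega\|_{C_T\ell^2_s}^3,\qquad \|\mathcal N_0[\omega]-\mathcal N_0[\tilde\omega]\|_{C_T\ell^2_s}\le CM^{-\delta}\big(\|\omega\|_{C_T\ell^2_s}^2+\|\tilde\omega\|_{C_T\ell^2_s}^2\big)\|\omega-\tilde\omega\|_{C_T\ell^2_s}.$$
   Context: $\langle n\rangle=(1+n^2)^{1/2}$, $\|\omega\|_{\ell^2_s}=\|\langle\cdot\rangle^s\omega\|_{\ell^2}$, $C_T\ell^2_s:=C([0,T];\ell^2_s(\mathbb Z))$ with sup-in-time norm, $\omega^*(n):=\overline{\omega(-n)}$. Notation $n_{ij\ldots}=n_i+n_j+\cdots$, $\hat n:=n-i\mathbf 1_{\{n=0\}}$; for $n=n_{123}$: $m_1:=2i\frac{nn_{23}}{\hat n_1\hat n_2}\mathbf 1_{\{n>0\}}\mathbf 1_{\{n_{23}<0\}}\mathbf 1_{\{n_3\ne0\}}$, $\tilde m_1:=m_1\mathbf 1_{\{n_{12}n_{13}\ne0\}}$, $\Phi:=n|n|-n_1|n_1|-n_2|n_2|-n_3|n_3|$. For $M>0$, $t\in[0,T]$: $$\mathcal N_0[\omega](t,n):=-i\sum_{n=n_{123},\ |\Phi|> M}\frac{e^{it\Phi}\tilde m_1(n,n_1,n_2,n_3)}{\Phi}\,\omega(t,n_1)\omega(t,n_2)\omega^*(t,n_3)\quad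 (n>0),$$ and $\mathcal N_0[\omega](t,n):=0$ for $n\le0$. *)

(* Defs.v *)
From Stdlib Require Import Reals ZArith ClassicalEpsilon.
Open Scope R_scope.

Definition Cx : Type := (R * R)%type.
Definition RtoC (r : R) : Cx := (r, 0).
Definition C0 : Cx := (0, 0).
Definition Ci : Cx := (0, 1).
Definition Cadd (z w : Cx) : Cx := (fst z + fst w, snd z + snd w).
Definition Copp (z : Cx) : Cx := (- fst z, - snd z).
Definition Csub (z w : Cx) : Cx := Cadd z (Copp w).
Definition Cmul (z w : Cx) : Cx :=
  (fst z * fst w - snd z * snd w, fst z * snd w + snd z * fst w).
Definition Cmod2 (z : Cx) : R := fst z ^ 2 + snd z ^ 2.
Definition Cinv (z : Cx) : Cx := (fst z / Cmod2 z, - snd z / Cmod2 z).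
Definition Cdiv (z w : Cx) : Cx := Cmul z (Cinv w).
Definition Cconj (z : Cx) : Cx := (fst z, - snd z).
Definition Cexpi (theta : R) : Cx := (cos theta, sin theta).

Definition Rlub (E : R -> Prop) : R := epsilon (inhabits 0) (is_lub E).

Definition jbr (n : Z) : R := sqrt (1 + IZR n ^ 2).

(* sum_{|n| <= N} <n>^{2s} |f n|^2 *)
Definition l2s_partial (s : R) (f : Z -> Cx) (N : nat) : R :=
  sum_f_R0 (fun k => (Rpower (jbr (Z.of_nat k - Z.of_nat N)%Z) s) ^ 2
                     * Cmod2 (f (Z.of_nat k - Z.of_nat N)%Z)) (2 * N).

Definition in_l2s (s : R) (f : Z -> Cx) : Prop :=
  exists B, forall N, l2s_partial s f N <= B.

Definition l2s_norm (s : R) (f : Z -> Cx) : R :=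
  sqrt (Rlub (fun x => exists N, x = l2s_partial s f N)).

Definition in_CTl2s (s T : R) (w : R -> Z -> Cx) : Prop :=
  (forall t, 0 <= t <= T -> in_l2s s (w t)) /\
  (forall t, 0 <= t <= T -> forall eps, 0 < eps -> exists eta, 0 < eta /\
     forall t', 0 <= t' <= T -> Rabs (t - t') < eta ->
       l2s_norm s (fun n => Csub (w t n) (w t' n)) < eps).

Definition CTnorm (s T : R) (w : R -> Z -> Cx) : R :=
  Rlub (fun x => exists t, 0 <= t <= T /\ x = l2s_norm s (w t)).

(* square partial sums over [-K,K]^2 *)
Definition sq_partial (f : Z -> Z -> Cx) (K : nat) : Cx :=
  let g := fun i j => f (Z.of_nat i - Z.of_nat K)%Z (Z.of_nat j - Z.of_nat K)%Z in
  (sum_f_R0 (fun i => sum_f_R0 (fun j => fst (g i j)) (2 * K)) (2 * K),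
   sum_f_R0 (fun i => sum_f_R0 (fun j => snd (g i j)) (2 * K)) (2 * K)).

Definition Csum2 (f : Z -> Z -> Cx) : Cx :=
  epsilon (inhabits C0) (fun L =>
    Un_cv (fun K => fst (sq_partial f K)) (fst L) /\
    Un_cv (fun K => snd (sq_partial f K)) (snd L)).

Definition ind (b : bool) : R := if b then 1 else 0.
Definition nhat (n : Z) : Cx := if Z.eqb n 0 then (0, -1) else RtoC (IZR n).
Definition zsq (n : Z) : Z := (n * Z.abs n)%Z.
Definition Phi (n n1 n2 n3 : Z) : Z := (zsq n - zsq n1 - zsq n2 - zsq n3)%Z.

Definition m1 (n n1 n2 n3 : Z) : Cx :=
  Cmul (Cmul (Cmul (RtoC 2) Ci)
     (Cdiv (RtoC (IZR (n * (n2 + n3))%Z)) (Cmul (nhat n1) (nhat n2))))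
   (RtoC (ind (0 <? n)%Z * ind (n2 + n3 <? 0)%Z * ind (negb (Z.eqb n3 0)))).

Definition m1t (n n1 n2 n3 : Z) : Cx :=
  Cmul (m1 n n1 n2 n3) (RtoC (ind (negb (Z.eqb ((n1 + n2) * (n1 + n3)) 0)))).

Definition wstar (w : R -> Z -> Cx) (t : R) (n : Z) : Cx := Cconj (w t (- n)%Z).

Definition N0_term (M : R) (w : R -> Z -> Cx) (t : R) (n n1 n2 : Z) : Cx :=
  let n3 := (n - n1 - n2)%Z in
  let P := Phi n n1 n2 n3 in
  if Rlt_dec M (IZR (Z.abs P)) then
    Cmul (Copp Ci)
      (Cmul (Cdiv (Cmul (Cexpi (t * IZR P)) (m1t n n1 n2 n3)) (RtoC (IZR P)))
            (Cmul (Cmul (w t n1) (w t n2)) (wstar w t n3)))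
  else C0.

Definition calN0 (M : R) (w : R -> Z -> Cx) (t : R) (n : Z) : Cx :=
  if (0 <? n)%Z then Csum2 (fun n1 n2 => N0_term M w t n n1 n2) else C0.

(* Main.v *)
Require Import Defs.
From Stdlib Require Import Reals ZArith Lra Lia Psatz ClassicalEpsilon.
Open Scope R_scope.

Definition IS (a : Z) (L : nat) (phi : Z -> R) : R :=
  sum_f_R0 (fun k => phi (a + Z.of_nat k)%Z) L.

Lemma IS_S a L phi : IS a (S L) phi = IS a L phi + phi (a + Z.of_nat (S L))%Z.
Proof. unfold IS; apply tech5. Qed.

Lemma IS_0 a phi : IS a 0 phi = phi a.
Proof. unfold IS; simpl; f_equal; lia. Qed.

Lemma IS_cons a L phi : IS a (S L) phi = phi a + IS (a+1) L phi.
Proof.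
  unfold IS. rewrite decomp_sum by lia. simpl pred.
  replace (a + Z.of_nat 0)%Z with a by lia. f_equal.
  apply sum_eq; intros; f_equal; lia.
Qed.

Lemma IS_ext a L phi psi : (forall m, phi m = psi m) -> IS a L phi = IS a L psi.
Proof. intros H; unfold IS; apply sum_eq; auto. Qed.

Lemma IS_le a L phi psi : (forall m, phi m <= psi m) -> IS a L phi <= IS a L psi.
Proof. intros H; unfold IS; apply sum_Rle; auto. Qed.

Lemma IS_nonneg a L phi : (forall m, 0 <= phi m) -> 0 <= IS a L phi.
Proof. intros H; unfold IS; apply cond_pos_sum; auto. Qed.

Lemma IS_plus a L phi psi : IS a L (fun m => phi m + psi m) = IS a L phi + IS a L psi.
Proof. unfold IS; apply sum_plus. Qed.

Lemma IS_scal a L phi c : IS a L (fun m => c * phi m) = c * IS a L phi.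
Proof. unfold IS; rewrite scal_sum; apply sum_eq; intros; ring. Qed.

Lemma IS_mono_len a L j phi : (forall m, 0 <= phi m) -> IS a L phi <= IS a (L + j) phi.
Proof.
  intros H; induction j. rewrite Nat.add_0_r; lra.
  rewrite Nat.add_succ_r, IS_S. specialize (H (a + Z.of_nat (S (L + j)))%Z). lra.
Qed.

Lemma IS_drop a j l phi : (forall m, 0 <= phi m) -> IS (a + Z.of_nat j) l phi <= IS a (j + l) phi.
Proof.
  intros H; revert a; induction j; intros a.
  - simpl. replace (a + 0)%Z with a by lia. lra.
  - simpl (S j + l)%nat. rewrite IS_cons.
    specialize (IHj (a+1)%Z). replace (a + 1 + Z.of_nat j)%Z with (a + Z.of_nat (S j))%Z in IHj by lia.
    specialize (H a). lra.
Qed.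

Lemma IS_sub a l b L phi : (forall m, 0 <= phi m) -> (b <= a)%Z ->
  (a + Z.of_nat l <= b + Z.of_nat L)%Z -> IS a l phi <= IS b L phi.
Proof.
  intros H h1 h2.
  set (j := Z.to_nat (a - b)).
  replace a with (b + Z.of_nat j)%Z by (unfold j; lia).
  eapply Rle_trans. apply IS_drop; auto.
  replace L with ((j + l) + (L - (j+l)))%nat by (unfold j; lia).
  apply IS_mono_len; auto.
Qed.

Lemma IS_tele a L phi Phi : (forall m, phi m <= Phi (m+1)%Z - Phi m) ->
  IS a L phi <= Phi (a + Z.of_nat L + 1)%Z - Phi a.
Proof.
  intros H; induction L.
  - rewrite IS_0. replace (a + Z.of_nat 0 + 1)%Z with (a+1)%Z by lia. auto.
  - rewrite IS_S. specialize (H (a + Z.of_nat (S L))%Z).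
    replace (a + Z.of_nat L + 1)%Z with (a + Z.of_nat (S L))%Z in IHL by (rewrite Nat2Z.inj_succ; lia). lra.
Qed.

Lemma IS_rev a L c phi : IS a L (fun m => phi (c - m)%Z) = IS (c - a - Z.of_nat L) L phi.
Proof.
  revert a; induction L; intros a.
  - rewrite !IS_0. f_equal; lia.
  - rewrite IS_S, IS_cons. rewrite IHL. 
    replace (c - a - Z.of_nat L)%Z with (c - a - Z.of_nat (S L) + 1)%Z by (rewrite Nat2Z.inj_succ; lia).
    replace (c - (a + Z.of_nat (S L)))%Z with (c - a - Z.of_nat (S L))%Z by lia. lra.
Qed.

Lemma IS_swap a L b L' (f : Z -> Z -> R) :
  IS a L (fun i => IS b L' (fun j => f i j)) = IS b L' (fun j => IS a L (fun i => f i j)).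
Proof.
  induction L.
  - rewrite IS_0. apply IS_ext; intros; rewrite IS_0; auto.
  - rewrite IS_S, IHL, <- IS_plus. apply IS_ext; intros; rewrite IS_S; auto.
Qed.

Definition W (K : nat) (phi : Z -> R) : R := IS (- Z.of_nat K) (2 * K) phi.

Lemma Cmod2_nonneg z : 0 <= Cmod2 z.
Proof. unfold Cmod2; nra. Qed.
Lemma Cmod2_mul z w : Cmod2 (Cmul z w) = Cmod2 z * Cmod2 w.
Proof. unfold Cmod2, Cmul; simpl; ring. Qed.
Lemma Cmod2_conj z : Cmod2 (Cconj z) = Cmod2 z.
Proof. unfold Cmod2, Cconj; simpl; ring. Qed.
Lemma Cmod2_opp z : Cmod2 (Copp z) = Cmod2 z.
Proof. unfold Cmod2, Copp; simpl; ring. Qed.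
Lemma Cmod2_Ci : Cmod2 Ci = 1.
Proof. unfold Cmod2, Ci; simpl; ring. Qed.
Lemma Cmod2_expi t : Cmod2 (Cexpi t) = 1.
Proof. unfold Cmod2, Cexpi; simpl. pose proof (sin2_cos2 t) as H. unfold Rsqr in H. lra. Qed.
Lemma Cmod2_RtoC r : Cmod2 (RtoC r) = r ^ 2.
Proof. unfold Cmod2, RtoC; simpl; ring. Qed.
Lemma Cmod2_inv z : Cmod2 z <> 0 -> Cmod2 (Cinv z) = / Cmod2 z.
Proof.
  intros H. unfold Cinv. unfold Cmod2 at 1; simpl.
  unfold Cmod2 in *. field. auto.
Qed.
Lemma Cmod2_div z w : Cmod2 w <> 0 -> Cmod2 (Cdiv z w) = Cmod2 z / Cmod2 w.
Proof. intros H; unfold Cdiv; rewrite Cmod2_mul, Cmod2_inv; auto. Qed.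
Lemma Cmod2_C0 : Cmod2 C0 = 0.
Proof. unfold Cmod2, C0; simpl; ring. Qed.

Definition Cmod z := sqrt (Cmod2 z).
Lemma Cmod_nonneg z : 0 <= Cmod z.
Proof. apply sqrt_pos. Qed.
Lemma Cmod_sq z : Cmod z ^ 2 = Cmod2 z.
Proof. unfold Cmod. rewrite <- Rsqr_pow2. apply Rsqr_sqrt, Cmod2_nonneg. Qed.
Lemma Cmod_mul z w : Cmod (Cmul z w) = Cmod z * Cmod w.
Proof. unfold Cmod; rewrite Cmod2_mul; apply sqrt_mult; apply Cmod2_nonneg. Qed.

Lemma sqrt_le_sq x y : 0 <= y -> x ^ 2 <= y ^ 2 -> sqrt (x ^ 2) <= y.
Proof.
  intros Hy H. rewrite <- (sqrt_pow2 y Hy). apply sqrt_le_1_alt. auto.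
Qed.

Lemma mink2 x y a b : sqrt ((x + a) ^ 2 + (y + b) ^ 2) <= sqrt (x^2 + y^2) + sqrt (a^2+b^2).
Proof.
  set (p := sqrt (x^2+y^2)). set (q := sqrt (a^2+b^2)).
  assert (Hp : 0 <= p) by apply sqrt_pos. assert (Hq : 0 <= q) by apply sqrt_pos.
  assert (Hp2 : p * p = x^2+y^2) by (apply sqrt_sqrt; nra).
  assert (Hq2 : q * q = a^2+b^2) by (apply sqrt_sqrt; nra).
  assert (Hpq : x * a + y * b <= p * q).
  { assert ((x*a+y*b)^2 <= (p*q)^2).
    { replace ((p*q)^2) with ((p*p)*(q*q)) by ring. rewrite Hp2, Hq2.
      pose proof (pow2_ge_0 (x*b-y*a)). nra. }
    destruct (Rle_dec (x*a+y*b) 0). nra.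
    apply Rsqr_incr_0_var. unfold Rsqr; nra. nra. }

  rewrite <- (sqrt_pow2 (p+q)) by lra. apply sqrt_le_1_alt. nra.
Qed.

Lemma Cmod_add z w : Cmod (Cadd z w) <= Cmod z + Cmod w.
Proof. unfold Cmod, Cmod2, Cadd; simpl. apply mink2. Qed.

Lemma IS_mink a L u v :
  sqrt ((IS a L u) ^ 2 + (IS a L v) ^ 2) <= IS a L (fun m => sqrt (u m ^ 2 + v m ^ 2)).
Proof.
  induction L.
  - rewrite !IS_0; lra.
  - rewrite !IS_S. eapply Rle_trans. apply mink2. lra.
Qed.

Lemma IS_CS a L u v :
  (IS a L (fun m => u m * v m)) ^ 2 <= IS a L (fun m => u m ^ 2) * IS a L (fun m => v m ^ 2).
Proof.
  induction L.
  - rewrite !IS_0; lra.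
  - rewrite !IS_S.
    set (S1 := IS a L (fun m => u m * v m)) in *.
    set (A := IS a L (fun m => u m ^ 2)) in *.
    set (B := IS a L (fun m => v m ^ 2)) in *.
    set (x := u (a + Z.of_nat (S L))%Z). set (y := v (a + Z.of_nat (S L))%Z).
    assert (HA : 0 <= A) by (apply IS_nonneg; intros; nra).
    assert (HB : 0 <= B) by (apply IS_nonneg; intros; nra).
    assert (2 * S1 * x * y <= A * y^2 + B * x ^2).
    { assert ((2*S1*x*y)^2 <= (A*y^2+B*x^2)^2).
      { assert (4*S1^2*x^2*y^2 <= 4*A*B*x^2*y^2).
        { assert (0 <= x^2*y^2) by nra.
          replace (4*S1^2*x^2*y^2) with (4*(x^2*y^2)*S1^2) by ring.
          replace (4*A*B*x^2*y^2) with (4*(x^2*y^2)*(A*B)) by ring.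
          apply Rmult_le_compat_l; lra. }
        assert (4*A*B*x^2*y^2 <= (A*y^2+B*x^2)^2) by (pose proof (pow2_ge_0 (A*y^2-B*x^2)); nra). nra. }
      destruct (Rle_dec (2*S1*x*y) 0). nra.
      apply Rsqr_incr_0_var. unfold Rsqr; nra. nra. }
    nra.
Qed.

Lemma IS_CS' a L u v : (forall m, 0 <= u m) -> (forall m, 0 <= v m) ->
  IS a L (fun m => u m * v m) <= sqrt (IS a L (fun m => u m ^ 2)) * sqrt (IS a L (fun m => v m ^ 2)).
Proof.
  intros Hu Hv. rewrite <- sqrt_mult by (apply IS_nonneg; intros; nra).
  rewrite <- (sqrt_pow2 (IS a L _)) by (apply IS_nonneg; intros; specialize (Hu m); specialize (Hv m); nra).
  apply sqrt_le_1_alt. apply IS_CS.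
Qed.

Lemma Rlub_spec E : bound E -> (exists x, E x) -> is_lub E (Rlub E).
Proof.
  intros Hb He. unfold Rlub. apply epsilon_spec.
  destruct (completeness E Hb He) as [m Hm]. eauto.
Qed.
Lemma Rlub_ge E x : bound E -> E x -> x <= Rlub E.
Proof. intros Hb Hx. destruct (Rlub_spec E Hb (ex_intro _ x Hx)) as [H _]. apply H; auto. Qed.
Lemma Rlub_le E B : (forall x, E x -> x <= B) -> (exists x, E x) -> Rlub E <= B.
Proof.
  intros HB He. destruct (Rlub_spec E (ex_intro _ B HB) He) as [_ H]. apply H. intros x Hx; auto.
Qed.

Definition rho (s : R) (m : Z) : R := (Rpower (jbr m) s) ^ 2.

Lemma jbr_ge1 m : 1 <= jbr m.
Proof. unfold jbr. rewrite <- sqrt_1 at 1. apply sqrt_le_1_alt. pose proof (pow2_ge_0 (IZR m)). lra. Qed.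

Lemma rho_ge1 s m : 0 <= s -> 1 <= rho s m.
Proof.
  intros Hs. unfold rho. assert (1 <= Rpower (jbr m) s).
  { rewrite <- (Rpower_O (jbr m)) by (pose proof (jbr_ge1 m); lra). apply Rle_Rpower; auto. apply jbr_ge1. }
  nra.
Qed.
Lemma rho_pos s m : 0 <= s -> 0 <= rho s m.
Proof. intros; pose proof (rho_ge1 s m H); lra. Qed.

Lemma rho_opp s m : rho s (- m) = rho s m.
Proof. unfold rho, jbr. rewrite opp_IZR. f_equal. f_equal. f_equal. ring. Qed.

Lemma rho_mono s m m' : 0 <= s -> (0 <= m <= m')%Z -> rho s m <= rho s m'.
Proof.
  intros Hs Hm. unfold rho.
  assert (Rpower (jbr m) s <= Rpower (jbr m') s).
  { apply Rle_Rpower_l; auto. split. pose proof (jbr_ge1 m); lra.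
    unfold jbr. apply sqrt_le_1_alt. destruct Hm as [H1 H2]. apply IZR_le in H1. apply IZR_le in H2.
    assert (IZR m ^2 <= IZR m' ^2) by nra. lra. }
  assert (0 <= Rpower (jbr m) s) by (unfold Rpower; apply Rlt_le, exp_pos). nra.
Qed.

Definition gw (s : R) (f : Z -> Cx) (m : Z) : R := rho s m * Cmod2 (f m).

Lemma gw_nonneg s f m : 0 <= s -> 0 <= gw s f m.
Proof. intros; unfold gw; pose proof (rho_pos s m H); pose proof (Cmod2_nonneg (f m)); nra. Qed.

Lemma l2s_partial_W s f N : l2s_partial s f N = W N (gw s f).
Proof.
  unfold l2s_partial, W, IS, gw, rho. apply sum_eq; intros.
  replace (Z.of_nat i - Z.of_nat N)%Z with (- Z.of_nat N + Z.of_nat i)%Z by lia. auto.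
Qed.

Lemma IS_in_W s f a L : 0 <= s -> IS a L (gw s f) <= W (Z.to_nat (Z.abs a) + L) (gw s f).
Proof.
  intros Hs. unfold W. apply IS_sub. intros; apply gw_nonneg; auto. lia. lia.
Qed.

Lemma l2s_norm_sq s f : 0 <= s -> in_l2s s f ->
  l2s_norm s f ^ 2 = Rlub (fun x => exists N, x = l2s_partial s f N).
Proof.
  intros Hs [B HB]. unfold l2s_norm. rewrite <- Rsqr_pow2. apply Rsqr_sqrt.
  eapply Rle_trans; [| apply Rlub_ge].
  2:{ exists B. intros x [N ->]. auto. }
  2:{ exists 0%nat. reflexivity. }
  rewrite l2s_partial_W. unfold W. apply IS_nonneg. intros; apply gw_nonneg; auto.
Qed.

Lemma l2s_IS s f a L : 0 <= s -> in_l2s s f -> IS a L (gw s f) <= l2s_norm s f ^ 2.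
Proof.
  intros Hs Hf. rewrite l2s_norm_sq by auto. eapply Rle_trans. apply IS_in_W; auto.
  apply Rlub_ge. destruct Hf as [B HB]. exists B. intros x [N ->]; auto.
  eexists. rewrite l2s_partial_W. reflexivity.
Qed.

Lemma l2s_norm_le s f B : (forall N, W N (gw s f) <= B) -> l2s_norm s f <= sqrt B.
Proof.
  intros H. unfold l2s_norm. apply sqrt_le_1_alt. apply Rlub_le.
  intros x [N ->]. rewrite l2s_partial_W; auto. exists (l2s_partial s f 0). eauto.
Qed.

Lemma l2s_norm_nonneg s f : 0 <= l2s_norm s f.
Proof. apply sqrt_pos. Qed.

Lemma in_l2s_of s f B : (forall N, W N (gw s f) <= B) -> in_l2s s f.
Proof. intros H; exists B; intros N; rewrite l2s_partial_W; auto. Qed.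

Lemma IS_mink_l2 a L u v : (forall m, 0 <= u m) -> (forall m, 0 <= v m) ->
  IS a L (fun m => (u m + v m) ^ 2) <=
  (sqrt (IS a L (fun m => u m ^ 2)) + sqrt (IS a L (fun m => v m ^ 2))) ^ 2.
Proof.
  intros Hu Hv.
  rewrite (IS_ext a L _ (fun m => (u m ^2 + v m ^ 2) + 2 * (u m * v m))) by (intros; ring).
  rewrite IS_plus, IS_plus, IS_scal.
  pose proof (IS_CS' a L u v Hu Hv).
  assert (HA : 0 <= IS a L (fun m => u m ^ 2)) by (apply IS_nonneg; intros; nra).
  assert (HB : 0 <= IS a L (fun m => v m ^ 2)) by (apply IS_nonneg; intros; nra).
  pose proof (sqrt_sqrt _ HA). pose proof (sqrt_sqrt _ HB). nra.
Qed.

Lemma l2s_tri s f g h : 0 <= s -> in_l2s s f -> in_l2s s g ->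
  (forall m, Cmod (h m) <= Cmod (f m) + Cmod (g m)) ->
  in_l2s s h /\ l2s_norm s h <= l2s_norm s f + l2s_norm s g.
Proof.
  intros Hs Hf Hg Hh.
  assert (HW : forall N, W N (gw s h) <= (l2s_norm s f + l2s_norm s g) ^ 2).
  { intros N. unfold W.
    set (u := fun m => sqrt (rho s m) * Cmod (f m)).
    set (v := fun m => sqrt (rho s m) * Cmod (g m)).
    assert (Hu : forall m, 0 <= u m) by (intros; unfold u; apply Rmult_le_pos; [apply sqrt_pos|apply Cmod_nonneg]).
    assert (Hv : forall m, 0 <= v m) by (intros; unfold v; apply Rmult_le_pos; [apply sqrt_pos|apply Cmod_nonneg]).
    assert (Eu : forall m, u m ^ 2 = gw s f m).
    { intros; unfold u, gw. rewrite Rpow_mult_distr, Cmod_sq, <- Rsqr_pow2, Rsqr_sqrt; auto. apply rho_pos; auto. }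
    assert (Ev : forall m, v m ^ 2 = gw s g m).
    { intros; unfold v, gw. rewrite Rpow_mult_distr, Cmod_sq, <- Rsqr_pow2, Rsqr_sqrt; auto. apply rho_pos; auto. }
    eapply Rle_trans with (IS _ _ (fun m => (u m + v m) ^ 2)).
    { apply IS_le; intros m. unfold gw, u, v. rewrite <- Cmod_sq.
      pose proof (rho_pos s m Hs). pose proof (sqrt_sqrt _ H).
      pose proof (Hh m). pose proof (Cmod_nonneg (h m)).
      pose proof (sqrt_pos (rho s m)).
      assert (Cmod (h m) ^ 2 <= (Cmod (f m) + Cmod (g m)) ^2) by nra.
      replace ((sqrt (rho s m) * Cmod (f m) + sqrt (rho s m) * Cmod (g m)) ^ 2)
        with ((sqrt (rho s m) * sqrt (rho s m)) * (Cmod (f m) + Cmod (g m)) ^2) by ring.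
      rewrite H0. apply Rmult_le_compat_l; auto. }
    eapply Rle_trans. apply IS_mink_l2; auto.
    rewrite (IS_ext _ _ _ _ Eu), (IS_ext _ _ _ _ Ev).
    assert (sqrt (IS (- Z.of_nat N) (2 * N) (gw s f)) <= l2s_norm s f).
    { rewrite <- (sqrt_pow2 (l2s_norm s f)) by apply l2s_norm_nonneg. apply sqrt_le_1_alt. apply l2s_IS; auto. }
    assert (sqrt (IS (- Z.of_nat N) (2 * N) (gw s g)) <= l2s_norm s g).
    { rewrite <- (sqrt_pow2 (l2s_norm s g)) by apply l2s_norm_nonneg. apply sqrt_le_1_alt. apply l2s_IS; auto. }
    pose proof (sqrt_pos (IS (- Z.of_nat N) (2 * N) (gw s f))).
    pose proof (sqrt_pos (IS (- Z.of_nat N) (2 * N) (gw s g))). nra. }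
  split. eapply in_l2s_of; eauto.
  eapply Rle_trans. apply l2s_norm_le; eauto. rewrite sqrt_pow2. lra.
  pose proof (l2s_norm_nonneg s f); pose proof (l2s_norm_nonneg s g); lra.
Qed.

Lemma Cmod_opp z : Cmod (Copp z) = Cmod z.
Proof. unfold Cmod; rewrite Cmod2_opp; auto. Qed.
Lemma Cmod_sub z w : Cmod (Csub z w) <= Cmod z + Cmod w.
Proof.
  unfold Csub. eapply Rle_trans. apply Cmod_add. rewrite Cmod_opp. lra.
Qed.
Lemma Cmod_sub_r z w : Cmod w <= Cmod z + Cmod (Csub z w).
Proof.
  replace w with (Cadd z (Copp (Csub z w))) at 1.
  eapply Rle_trans. apply Cmod_add. rewrite Cmod_opp. lra.
  unfold Cadd, Copp, Csub; destruct z, w; simpl; f_equal; ring.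
Qed.
Lemma Cmod_sub_l z w : Cmod z <= Cmod (Csub z w) + Cmod w.
Proof.
  replace z with (Cadd (Csub z w) w) at 1.
  apply Cmod_add.
  unfold Cadd, Copp, Csub; destruct z, w; simpl; f_equal; ring.
Qed.

Definition clamp (T t : R) := Rmax 0 (Rmin T t).
Lemma clamp_in T t : 0 <= T -> 0 <= clamp T t <= T.
Proof. intros; unfold clamp, Rmax, Rmin; repeat destruct Rle_dec; lra. Qed.
Lemma clamp_id T t : 0 <= t <= T -> clamp T t = t.
Proof. intros; unfold clamp, Rmax, Rmin; repeat destruct Rle_dec; lra. Qed.
Lemma clamp_lip T t u : 0 <= T -> Rabs (clamp T t - clamp T u) <= Rabs (t - u).
Proof. intros; unfold clamp, Rmax, Rmin; repeat destruct Rle_dec; unfold Rabs; repeat destruct Rcase_abs; lra. Qed.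

Lemma CT_bound s T w : 0 <= s -> 0 <= T -> in_CTl2s s T w ->
  (forall t, 0 <= t <= T -> l2s_norm s (w t) <= CTnorm s T w) /\ 0 <= CTnorm s T w.
Proof.
  intros Hs HT [Hin Hc].
  set (g := fun t => l2s_norm s (w (clamp T t))).
  assert (Hcont : forall c, 0 <= c <= T -> continuity_pt g c).
  { intros c Hc0. unfold continuity_pt, continue_in, limit1_in, limit_in. intros eps Heps.
    destruct (Hc (clamp T c) (clamp_in T c HT) eps Heps) as [eta [Heta H]].
    exists eta. split; auto. intros x [_ Hx]. simpl in Hx. unfold R_dist in *. simpl.
    pose proof (clamp_in T x HT) as Hx'.
    assert (Hd : Rabs (clamp T c - clamp T x) < eta).
    { eapply Rle_lt_trans. apply clamp_lip; auto. rewrite Rabs_minus_sym. auto. }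
    specialize (H (clamp T x) Hx' Hd).
    set (a := w (clamp T c)) in *. set (b := w (clamp T x)) in *.
    assert (Ha : in_l2s s a) by (apply Hin, clamp_in; auto).
    assert (Hb : in_l2s s b) by (apply Hin, clamp_in; auto).
    destruct (l2s_tri s a b (fun n => Csub (a n) (b n)) Hs Ha Hb (fun m => Cmod_sub _ _)) as [Hd' _].
    destruct (l2s_tri s a (fun n => Csub (a n) (b n)) b Hs Ha Hd' (fun m => Cmod_sub_r _ _)) as [_ H1].
    destruct (l2s_tri s (fun n => Csub (a n) (b n)) b a Hs Hd' Hb (fun m => Cmod_sub_l _ _)) as [_ H2].
    unfold g. fold a b. simpl. unfold R_dist. unfold Rabs; destruct Rcase_abs; lra. }
  destruct (continuity_ab_maj g 0 T HT Hcont) as [Mx [HM HMx]].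
  assert (Hb : bound (fun x => exists t, 0 <= t <= T /\ x = l2s_norm s (w t))).
  { exists (g Mx). intros x [t [Ht ->]]. specialize (HM t Ht). unfold g in HM. rewrite clamp_id in HM; auto. }
  assert (H1 : forall t, 0 <= t <= T -> l2s_norm s (w t) <= CTnorm s T w).
  { intros t Ht. unfold CTnorm. apply Rlub_ge; auto. eauto. }
  split; auto. eapply Rle_trans; [apply l2s_norm_nonneg | apply (H1 0)]. lra.
Qed.

Lemma Cmod2_nhat m : Cmod2 (nhat m) = if Z.eqb m 0 then 1 else IZR m ^ 2.
Proof. unfold nhat; destruct (Z.eqb m 0); [unfold Cmod2; simpl; ring | apply Cmod2_RtoC]. Qed.

Lemma sq_pos x : x <> 0 -> 0 < x ^ 2.
Proof. intros H. destruct (Rlt_or_le x 0). nra. destruct H0. nra. congruence. Qed.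

Lemma Cmod2_nhat_pos m : 0 < Cmod2 (nhat m).
Proof.
  rewrite Cmod2_nhat. destruct (Z.eqb_spec m 0). lra.
  apply sq_pos. apply not_0_IZR; auto.
Qed.

Definition KK (M : R) (n n1 n2 : Z) : R :=
  let n3 := (n - n1 - n2)%Z in
  let P := Phi n n1 n2 n3 in
  if Rlt_dec M (IZR (Z.abs P)) then Cmod2 (m1t n n1 n2 n3) / (IZR P) ^ 2 else 0.

Lemma ind_sq b : Defs.ind b ^ 2 = Defs.ind b.
Proof. destruct b; simpl; ring. Qed.

Lemma Cmod2_m1t n n1 n2 n3 : Cmod2 (m1t n n1 n2 n3) =
  4 * (IZR (n * (n2 + n3))) ^ 2 / (Cmod2 (nhat n1) * Cmod2 (nhat n2)) *
  (Defs.ind (0 <? n)%Z * Defs.ind (n2 + n3 <? 0)%Z * Defs.ind (negb (Z.eqb n3 0)) *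
   Defs.ind (negb (Z.eqb ((n1 + n2) * (n1 + n3)) 0))).
Proof.
  unfold m1t, m1. rewrite !Cmod2_mul, !Cmod2_RtoC, Cmod2_div, Cmod2_Ci, Cmod2_RtoC, Cmod2_mul.
  2:{ rewrite Cmod2_mul. pose proof (Cmod2_nhat_pos n1). pose proof (Cmod2_nhat_pos n2). nra. }
  rewrite !Rpow_mult_distr, !ind_sq. unfold Rdiv. ring.
Qed.

Lemma KK_nonneg M n n1 n2 : 0 <= M -> 0 <= KK M n n1 n2.
Proof.
  intros HM. unfold KK. destruct Rlt_dec; [|lra]. apply Rmult_le_pos. apply Cmod2_nonneg.
  apply Rlt_le, Rinv_0_lt_compat. apply sq_pos. intros H. apply eq_IZR_R0 in H. rewrite H in r.
  simpl in r. lra.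
Qed.

Definition vv (m : Z) : R := / Cmod2 (nhat m).
Definition TT (L : R) (m : Z) : R := if Rle_dec L (IZR (Z.abs m)) then vv m else 0.

Lemma vv_pos m : 0 < vv m.
Proof. unfold vv; apply Rinv_0_lt_compat, Cmod2_nhat_pos. Qed.
Lemma TT_nonneg L m : 0 <= TT L m.
Proof. unfold TT; destruct Rle_dec; [apply Rlt_le, vv_pos|lra]. Qed.
Lemma vv_nz m : m <> 0%Z -> vv m = / IZR m ^ 2.
Proof. intros H; unfold vv; rewrite Cmod2_nhat. destruct (Z.eqb_spec m 0); [lia|auto]. Qed.
Lemma TT_big L m : L <= IZR (Z.abs m) -> TT L m = vv m.
Proof. intros H; unfold TT; destruct Rle_dec; [auto|lra]. Qed.
Lemma vv_opp m : vv (- m) = vv m.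
Proof. unfold vv; rewrite !Cmod2_nhat. destruct (Z.eqb_spec m 0); destruct (Z.eqb_spec (-m) 0); try lia.
  auto. rewrite opp_IZR; f_equal; ring. Qed.
Lemma TT_opp L m : TT L (- m) = TT L m.
Proof. unfold TT. rewrite Z.abs_opp, vv_opp. auto. Qed.

Lemma KK_explicit M n n1 n2 : 0 <= M ->
  (0 < n)%Z -> (n2 + (n - n1 - n2) < 0)%Z -> (n - n1 - n2 <> 0)%Z ->
  ((n1 + n2) * (n1 + (n - n1 - n2)) <> 0)%Z ->
  M < IZR (Z.abs (Phi n n1 n2 (n - n1 - n2))) ->
  KK M n n1 n2 = 4 * IZR (n * (n2 + (n - n1 - n2))) ^ 2 /
     (Cmod2 (nhat n1) * Cmod2 (nhat n2) * IZR (Phi n n1 n2 (n - n1 - n2)) ^ 2).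
Proof.
  intros HM h1 h2 h3 h4 h5. unfold KK. destruct Rlt_dec; [|lra].
  rewrite Cmod2_m1t.
  replace (0 <? n)%Z with true by (symmetry; apply Z.ltb_lt; auto).
  replace (n2 + (n - n1 - n2) <? 0)%Z with true by (symmetry; apply Z.ltb_lt; auto).
  replace (Z.eqb (n - n1 - n2) 0) with false by (symmetry; apply Z.eqb_neq; auto).
  replace (Z.eqb ((n1 + n2) * (n1 + (n - n1 - n2))) 0) with false by (symmetry; apply Z.eqb_neq; auto).
  simpl. assert (IZR (Phi n n1 n2 (n - n1 - n2)) <> 0).
  { intros H. apply eq_IZR_R0 in H. rewrite H in r. simpl in r. lra. }
  pose proof (Cmod2_nhat_pos n1). pose proof (Cmod2_nhat_pos n2).
  field. repeat split; lra.
Qed.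

Lemma KK_zero M n n1 n2 :
  ~ ((0 < n)%Z /\ (n2 + (n - n1 - n2) < 0)%Z /\ (n - n1 - n2 <> 0)%Z /\
  ((n1 + n2) * (n1 + (n - n1 - n2)) <> 0)%Z) -> KK M n n1 n2 = 0.
Proof.
  intros H. unfold KK. destruct Rlt_dec; [|auto]. rewrite Cmod2_m1t.
  destruct (Z.ltb_spec 0 n); destruct (Z.ltb_spec (n2 + (n - n1 - n2)) 0);
  destruct (Z.eqb_spec (n - n1 - n2) 0); destruct (Z.eqb_spec ((n1 + n2) * (n1 + (n - n1 - n2))) 0);
  simpl; try (unfold Rdiv; ring). exfalso; apply H; repeat split; auto; lia.
Qed.
Lemma kk_le X Q Y : 0 < Q -> X <= Y * Q -> X / Q <= Y.
Proof.
  intros HQ H. apply (Rmult_le_reg_r Q); auto. unfold Rdiv. rewrite Rmult_assoc, Rinv_l; lra.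
Qed.

Lemma RA x y e p : 0 < e -> 1 <= x -> 1 <= y -> 2*x*y <= - p ->
  4 * (-(x*y))^2 / ((x+y)^2 * e * p^2) <= /(x+y)^2 * /e.
Proof.
  intros He Hx Hy Hp. apply kk_le.
  assert (2 <= -p) by nra. assert (0 < p^2) by nra. assert (0 < (x+y)^2) by nra. 
  apply Rmult_lt_0_compat; [apply Rmult_lt_0_compat|]; lra.
  replace (/ (x + y) ^ 2 * / e * ((x + y) ^ 2 * e * p ^ 2)) with (p^2) by (field; split; nra).
  assert (Hq0 : 0 <= 2*x*y) by nra. pose proof (Rmult_le_compat _ _ _ _ Hq0 Hq0 Hp Hp). nra.
Qed.

Lemma RB1 x y q dd p : 1 <= x -> 1 <= y -> q <> 0 -> dd <> 0 -> p = 2*y*dd -> x <= 2 * Rabs q ->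
  4 * (-(x*y))^2 / ((x+y)^2 * q^2 * p^2) <= 4 * (/(x+y)^2 * /dd^2).
Proof.
  intros Hx Hy Hq Hd Hp Hxq. subst p. apply kk_le.
  assert (0 < q^2) by (destruct (Rlt_or_le q 0); [nra| destruct H; [nra|congruence]]).
  assert (0 < dd^2) by (destruct (Rlt_or_le dd 0); [nra| destruct H0; [nra|congruence]]).
  assert (0 < (x+y)^2) by nra.
  assert (0 < (2*y*dd)^2) by (replace ((2*y*dd)^2) with (4*(y^2*dd^2)) by ring; assert (0 < y^2) by nra;
     apply Rmult_lt_0_compat; [lra|]; apply Rmult_lt_0_compat; lra).
  apply Rmult_lt_0_compat; [apply Rmult_lt_0_compat|]; lra.
  replace (4 * (/ (x + y) ^ 2 * / dd ^ 2) * ((x + y) ^ 2 * q ^ 2 * (2 * y * dd) ^ 2)) with (16*q^2*y^2)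
    by (field; split; [auto|nra]).
  assert (x^2 <= 4 * q^2). { assert (Rabs q ^2 = q^2) by (unfold Rabs; destruct Rcase_abs; ring). nra. }
  nra.
Qed.

Lemma RB2 x y q dd p : 1 <= x -> 1 <= y -> q <> 0 -> dd <> 0 -> p = 2*y*dd -> x <= 2 * Rabs dd ->
  4 * (-(x*y))^2 / ((x+y)^2 * q^2 * p^2) <= 4 * (/(x+y)^2 * /q^2).
Proof.
  intros Hx Hy Hq Hd Hp Hxq. subst p. apply kk_le.
  assert (0 < q^2) by (destruct (Rlt_or_le q 0); [nra| destruct H; [nra|congruence]]).
  assert (0 < dd^2) by (destruct (Rlt_or_le dd 0); [nra| destruct H0; [nra|congruence]]).
  assert (0 < (x+y)^2) by nra.
  assert (0 < (2*y*dd)^2) by (replace ((2*y*dd)^2) with (4*(y^2*dd^2)) by ring; assert (0 < y^2) by nra;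
     apply Rmult_lt_0_compat; [lra|]; apply Rmult_lt_0_compat; lra).
  apply Rmult_lt_0_compat; [apply Rmult_lt_0_compat|]; lra.
  replace (4 * (/ (x + y) ^ 2 * / q ^ 2) * ((x + y) ^ 2 * q ^ 2 * (2 * y * dd) ^ 2)) with (16*dd^2*y^2)
    by (field; split; [auto|nra]).
  assert (x^2 <= 4 * dd^2). { assert (Rabs dd ^2 = dd^2) by (unfold Rabs; destruct Rcase_abs; ring). nra. }
  nra.
Qed.

Lemma sqrt_le_of_sq L M u : L = sqrt (M/2) -> 0 <= M -> 0 <= u -> M/2 <= u^2 -> L <= u.
Proof.
  intros -> HM Hu H. rewrite <- (sqrt_pow2 u Hu). apply sqrt_le_1_alt. lra.
Qed.

Lemma pick1 X t1 t2 t3 t4 t5 : X <= 4*t1 -> 0<=t2 -> 0<=t3 -> 0<=t4 -> 0<=t5 -> X <= 4*(t1+t2+t3+t4+t5).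
Proof. intros; lra. Qed.
Lemma pick2 X t1 t2 t3 t4 t5 : X <= 4*t2 -> 0<=t1 -> 0<=t3 -> 0<=t4 -> 0<=t5 -> X <= 4*(t1+t2+t3+t4+t5).
Proof. intros; lra. Qed.
Lemma pick3 X t1 t2 t3 t4 t5 : X <= 4*t3 -> 0<=t1 -> 0<=t2 -> 0<=t4 -> 0<=t5 -> X <= 4*(t1+t2+t3+t4+t5).
Proof. intros; lra. Qed.
Lemma pick4 X t1 t2 t3 t4 t5 : X <= 4*t4 -> 0<=t1 -> 0<=t2 -> 0<=t3 -> 0<=t5 -> X <= 4*(t1+t2+t3+t4+t5).
Proof. intros; lra. Qed.
Lemma pick5 X t1 t2 t3 t4 t5 : X <= 4*t5 -> 0<=t1 -> 0<=t2 -> 0<=t3 -> 0<=t4 -> X <= 4*(t1+t2+t3+t4+t5).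
Proof. intros; lra. Qed.

Ltac nn := repeat first [ apply Rmult_le_pos | apply TT_nonneg | apply (Rlt_le _ _ (vv_pos _))
   | (apply Rlt_le, Rinv_0_lt_compat; first [lra | apply sq_pos; auto]) ].

Lemma KK_bound M n n1 n2 : 1 <= M ->
  KK M n n1 n2 <= 4 * (TT (sqrt (M/2)) n1 * vv n2 + TT (sqrt (M/2)) n1 * vv (n2 - n)
     + vv n1 * TT (sqrt (M/2)) (n2 - n) + TT (sqrt (M/2)) n1 * vv (n2 + n1)
     + vv n1 * TT (sqrt (M/2)) (n2 + n1)).
Proof.
  intros HM. set (L := sqrt (M/2)).
  assert (HL : L*L = M/2) by (apply sqrt_sqrt; lra).
  assert (HL0 : 0 < L) by (apply sqrt_lt_R0; lra).
  assert (Hnn : forall a b, 0 <= a -> 0 <= b -> 0 <= a * b) by (intros; apply Rmult_le_pos; auto).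
  pose proof (Hnn _ _ (TT_nonneg L n1) (Rlt_le _ _ (vv_pos n2))) as P1.
  pose proof (Hnn _ _ (TT_nonneg L n1) (Rlt_le _ _ (vv_pos (n2 - n)))) as P2.
  pose proof (Hnn _ _ (Rlt_le _ _ (vv_pos n1)) (TT_nonneg L (n2 - n))) as P3.
  pose proof (Hnn _ _ (TT_nonneg L n1) (Rlt_le _ _ (vv_pos (n2 + n1)))) as P4.
  pose proof (Hnn _ _ (Rlt_le _ _ (vv_pos n1)) (TT_nonneg L (n2 + n1))) as P5.
  destruct (Classical_Prop.classic ((0 < n)%Z /\ (n2 + (n - n1 - n2) < 0)%Z /\ (n - n1 - n2 <> 0)%Z /\
    ((n1 + n2) * (n1 + (n - n1 - n2)) <> 0)%Z)) as [Hc|Hc];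
    [| rewrite KK_zero by auto; lra].
  destruct Hc as (h1 & h2 & h3 & h4).
  destruct (Rlt_dec M (IZR (Z.abs (Phi n n1 n2 (n - n1 - n2))))) as [h5|h5];
    [| unfold KK; destruct Rlt_dec; [contradiction| lra]].
  rewrite KK_explicit by (auto; lra).
  remember (n1 - n)%Z as a. assert (n1 = n + a)%Z by lia. subst n1.
  replace (n - (n+a) - n2)%Z with (-a-n2)%Z in * by ring.
  replace (n2 + (-a-n2))%Z with (-a)%Z in * by ring.
  assert (ha : (1 <= a)%Z) by lia.
  rewrite (Cmod2_nhat (n+a)). destruct (Z.eqb_spec (n+a) 0); [lia|].
  rewrite (vv_nz (n+a)) in * by lia.
  set (P := Phi n (n+a) n2 (-a-n2)) in *.
  replace (IZR (n * -a)) with (- (IZR n * IZR a)) by (rewrite mult_IZR, opp_IZR; ring).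
  assert (HabsN : IZR (Z.abs (n+a)) = IZR n + IZR a) by (rewrite Z.abs_eq by lia; apply plus_IZR).
  rewrite plus_IZR in *.
  assert (Hx : 1 <= IZR n) by (apply IZR_le; lia).
  assert (Hy : 1 <= IZR a) by (apply IZR_le; lia).
  set (x := IZR n) in *. set (y := IZR a) in *.
  assert (Hxy : 0 < (x + y)^2) by nra.
  destruct (Z_le_gt_dec n2 0) as [hn2|hn2].
  - destruct (Z_le_gt_dec n2 (-a)) as [hn2'|hn2'].
    +
      assert (hn3 : (1 <= -a - n2)%Z) by lia.
      assert (HP : P = (2 * a * ((-a-n2) - n))%Z).
      { unfold P, Phi, zsq. rewrite (Z.abs_eq n), (Z.abs_eq (n+a)), (Z.abs_neq n2), (Z.abs_eq (-a-n2)) by lia. ring. }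
      assert (hd : ((-a-n2) - n <> 0)%Z) by (intro; apply h4; nia).
      rewrite (Cmod2_nhat n2). destruct (Z.eqb_spec n2 0); [lia|].
      rewrite (vv_nz n2), (vv_nz (n2 + (n+a))) in * by lia.
      replace (IZR (n2 + (n + a))) with (- IZR ((-a-n2) - n)) in * by (rewrite <- opp_IZR; f_equal; ring).
      assert (Hz : IZR n2 <> 0) by (apply not_0_IZR; lia).
      assert (Hd : IZR ((-a-n2) - n) <> 0) by (apply not_0_IZR; lia).
      assert (HPr : IZR P = 2 * y * IZR ((-a-n2) - n)) by (rewrite HP, !mult_IZR; unfold y; ring).
      assert (HabsD : IZR (Z.abs (n2 + (n+a))) = Rabs (IZR ((-a-n2) - n))).
      { rewrite abs_IZR. rewrite <- Rabs_Ropp, <- opp_IZR. f_equal. f_equal. ring. }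
      assert (HM2 : M < 2 * y * Rabs (IZR (-a-n2-n))).
      { rewrite HP, abs_IZR, !mult_IZR, !Rabs_mult in h5.
        rewrite (Rabs_right 2), (Rabs_right (IZR a)) in h5 by (apply Rle_ge; fold y; lra). fold y in h5. exact h5. }
      replace ((- IZR (-a-n2-n)) ^ 2) with (IZR (-a-n2-n) ^ 2) in * by ring.
      destruct (Z_le_gt_dec (Z.abs ((-a-n2) - n)) (-a-n2)) as [c1|c2].
      * assert (Hq : x <= 2 * Rabs (IZR n2)).
        { rewrite <- abs_IZR. unfold x. rewrite <- mult_IZR. apply IZR_le. lia. }
        pose proof (RB1 x y (IZR n2) (IZR (-a-n2-n)) (IZR P) Hx Hy Hz Hd HPr Hq) as HR.
        destruct (Rle_dec L (x + y)) as [l1|l1].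
        -- rewrite (TT_big L (n+a)) by lra. rewrite (vv_nz (n+a)), plus_IZR by lia.
           fold x y. apply pick4; [exact HR| nn..].
        -- assert (l2 : L <= Rabs (IZR (-a-n2-n))).
           { pose proof (Rabs_pos (IZR (-a-n2-n))). nra. }
           rewrite (TT_big L (n2 + (n+a))) by lra.
           rewrite (vv_nz (n2 + (n+a))) by lia.
           replace (IZR (n2 + (n + a))) with (- IZR ((-a-n2) - n)) by (rewrite <- opp_IZR; f_equal; ring).
           replace ((- IZR (-a-n2-n)) ^ 2) with (IZR (-a-n2-n) ^ 2) by ring. apply pick5; [exact HR| nn..].
      * assert (Hq : x <= 2 * Rabs (IZR (-a-n2-n))).
        { rewrite <- abs_IZR. unfold x. rewrite <- mult_IZR. apply IZR_le. lia. }
        pose proof (RB2 x y (IZR n2) (IZR (-a-n2-n)) (IZR P) Hx Hy Hz Hd HPr Hq) as HR.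
        assert (l1 : L <= x + y).
        { assert (Rabs (IZR (-a-n2-n)) <= x).
          { rewrite <- abs_IZR. apply IZR_le. lia. }
          nra. }
        rewrite (TT_big L (n+a)) by lra. rewrite (vv_nz (n+a)), plus_IZR by lia.
        fold x y. apply pick1; [exact HR| nn..].
    +
      assert (HP : (2*n*a <= - P /\ - P <= (n+a)*(n+a))%Z).
      { unfold P, Phi, zsq. rewrite (Z.abs_eq n), (Z.abs_eq (n+a)), (Z.abs_neq n2), (Z.abs_neq (-a-n2)) by lia.
        split; nia. }
      assert (HPr1 : 2 * x * y <= - IZR P).
      { unfold x, y. rewrite <- opp_IZR. rewrite <- mult_IZR. replace 2 with (IZR 2) by auto.
        rewrite <- mult_IZR. apply IZR_le. lia. }
      assert (HPr2 : - IZR P <= (x + y)^2).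
      { unfold x, y. replace ((IZR n + IZR a)^2) with (IZR ((n+a)*(n+a))) by (rewrite mult_IZR, plus_IZR; ring).
        rewrite <- opp_IZR. apply IZR_le. lia. }
      assert (HabsP : IZR (Z.abs P) = - IZR P) by (rewrite Z.abs_neq by lia; apply opp_IZR).
      assert (l1 : L <= x + y) by (apply (sqrt_le_of_sq L M); auto; lra).
      pose proof (RA x y (Cmod2 (nhat n2)) (IZR P) (Cmod2_nhat_pos n2) Hx Hy HPr1) as HR.
      rewrite (TT_big L (n+a)) by lra. rewrite (vv_nz (n+a)), plus_IZR by lia. fold x y.
      apply pick1; [| nn..]. unfold vv.
      assert (0 <= / (x + y) ^ 2 * / Cmod2 (nhat n2)) by (pose proof (Cmod2_nhat_pos n2); nn).
      lra.
  -
    assert (HP : P = (2 * a * (n2 - n))%Z).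
    { unfold P, Phi, zsq. rewrite (Z.abs_eq n), (Z.abs_eq (n+a)), (Z.abs_eq n2), (Z.abs_neq (-a-n2)) by lia. ring. }
    assert (hd : (n2 - n <> 0)%Z) by (intro; apply h4; nia).
    rewrite (Cmod2_nhat n2). destruct (Z.eqb_spec n2 0); [lia|].
    assert (Hz : IZR n2 <> 0) by (apply not_0_IZR; lia).
    assert (Hd : IZR (n2 - n) <> 0) by (apply not_0_IZR; lia).
    assert (HPr : IZR P = 2 * y * IZR (n2 - n)) by (rewrite HP, !mult_IZR; unfold y; ring).
    assert (HM2 : M < 2 * y * Rabs (IZR (n2 - n))).
    { rewrite HP, abs_IZR, !mult_IZR, !Rabs_mult in h5.
      rewrite (Rabs_right 2), (Rabs_right (IZR a)) in h5 by (apply Rle_ge; fold y; lra). fold y in h5. exact h5. }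
    destruct (Z_le_gt_dec (Z.abs (n2 - n)) n2) as [c1|c2].
    * assert (Hq : x <= 2 * Rabs (IZR n2)).
      { rewrite <- abs_IZR. unfold x. rewrite <- mult_IZR. apply IZR_le. lia. }
      pose proof (RB1 x y (IZR n2) (IZR (n2 - n)) (IZR P) Hx Hy Hz Hd HPr Hq) as HR.
      destruct (Rle_dec L (x + y)) as [l1|l1].
      -- rewrite (TT_big L (n+a)) by lra. rewrite (vv_nz (n+a)), plus_IZR by lia.
         rewrite (vv_nz (n2 - n)) by lia.
         fold x y. apply pick2; [exact HR| nn..].
      -- assert (l2 : L <= Rabs (IZR (n2 - n))).
         { pose proof (Rabs_pos (IZR (n2 - n))). nra. }
         rewrite (TT_big L (n2 - n)) by (rewrite abs_IZR; lra).
         rewrite (vv_nz (n2 - n)) by lia. apply pick3; [exact HR| nn..].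
    * assert (Hq : x <= 2 * Rabs (IZR (n2 - n))).
      { rewrite <- abs_IZR. unfold x. rewrite <- mult_IZR. apply IZR_le. lia. }
      pose proof (RB2 x y (IZR n2) (IZR (n2 - n)) (IZR P) Hx Hy Hz Hd HPr Hq) as HR.
      assert (l1 : L <= x + y).
      { assert (Rabs (IZR (n2 - n)) <= x).
        { rewrite <- abs_IZR. apply IZR_le. lia. }
        nra. }
      rewrite (TT_big L (n+a)) by lra. rewrite (vv_nz (n+a)), plus_IZR by lia.
      rewrite (vv_nz n2) by lia.
      fold x y. apply pick1; [exact HR| nn..].
Qed.

Lemma inv_le_div A B c : 0 < A -> 0 < B -> B <= c * A -> / A <= c / B.
Proof.
  intros HA HB H. apply (Rmult_le_reg_r B); auto. unfold Rdiv. rewrite Rmult_assoc, Rinv_l by lra.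
  apply (Rmult_le_reg_l A); auto. rewrite <- Rmult_assoc, Rinv_r by lra. lra.
Qed.

Definition Phiv (m : Z) : R := 6 * IZR m / (IZR (Z.abs m) + 1).

Lemma vv_tele m : vv m <= Phiv (m+1) - Phiv m.
Proof.
  unfold Phiv. destruct (Z_lt_le_dec m 0) as [h|h]; [|destruct (Z.eq_dec m 0) as [e|e]].
  - rewrite vv_nz by lia. rewrite (Z.abs_neq m), (Z.abs_neq (m+1)) by lia.
    rewrite !opp_IZR, !plus_IZR. assert (Hr : IZR m <= -1) by (replace (-1) with (IZR (-1)) by auto; apply IZR_le; lia).
    set (r := IZR m).
    replace (6 * (r + 1) / (- (r + 1) + 1) - 6 * r / (- r + 1)) with (6 / ((-r) * (1 - r)))  by (field; unfold r in *; repeat split; intro; nra).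
    apply inv_le_div; unfold r in *; nra.
  - subst m. unfold vv. rewrite Cmod2_nhat. simpl. lra.
  - rewrite vv_nz by lia. rewrite (Z.abs_eq m), (Z.abs_eq (m+1)) by lia.
    rewrite !plus_IZR. assert (Hr : 1 <= IZR m) by (apply IZR_le; lia).
    set (r := IZR m).
    replace (6 * (r + 1) / (r + 1 + 1) - 6 * r / (r + 1)) with (6 / ((r+1) * (r+2))) by (field; unfold r in *; repeat split; intro; nra).
    apply inv_le_div; unfold r in *; nra.
Qed.

Lemma Phiv_bound m : Rabs (Phiv m) <= 6.
Proof.
  unfold Phiv. rewrite abs_IZR. assert (0 <= Rabs (IZR m)) by apply Rabs_pos.
  unfold Rdiv. rewrite Rabs_mult, Rabs_mult, Rabs_Rinv by lra. rewrite (Rabs_right 6) by lra.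
  rewrite (Rabs_right (Rabs (IZR m) + 1)) by lra.
  apply (Rmult_le_reg_r (Rabs (IZR m) + 1)); [lra|]. rewrite Rmult_assoc, Rinv_l by lra. nra.
Qed.

Lemma IS_vv a L : IS a L vv <= 12.
Proof.
  eapply Rle_trans. apply IS_tele. intros; apply vv_tele.
  pose proof (Phiv_bound (a + Z.of_nat L + 1)). pose proof (Phiv_bound a).
  unfold Rabs in *; repeat destruct Rcase_abs; lra.
Qed.

Definition PhiT (L : R) (m : Z) : R := 2 / Rmax (1 - IZR m) L - 2 / Rmax (IZR m) L.

Lemma inv_anti A B : 0 < A -> A <= B -> 2 / B <= 2 / A.
Proof. intros. unfold Rdiv. apply Rmult_le_compat_l; [lra|]. apply Rinv_le_contravar; lra. Qed.

Lemma TT_tele L m : 0 < L -> TT L m <= PhiT L (m+1) - PhiT L m.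
Proof.
  intros HL. unfold PhiT. rewrite plus_IZR. set (r := IZR m).
  assert (B1 : 2 / Rmax (1 - (r+1)) L - 2 / Rmax (1 - r) L >= 0).
  { assert (0 < Rmax (1 - (r+1)) L) by (apply Rlt_le_trans with L; [lra|apply Rmax_r]).
    pose proof (inv_anti (Rmax (1 - (r+1)) L) (Rmax (1 - r) L) H).
    assert (Rmax (1 - (r+1)) L <= Rmax (1 - r) L) by (unfold Rmax; repeat destruct Rle_dec; lra). lra. }
  assert (B2 : 2 / Rmax r L - 2 / Rmax (r+1) L >= 0).
  { assert (0 < Rmax r L) by (apply Rlt_le_trans with L; [lra|apply Rmax_r]).
    pose proof (inv_anti (Rmax r L) (Rmax (r+1) L) H).
    assert (Rmax r L <= Rmax (r+1) L) by (unfold Rmax; repeat destruct Rle_dec; lra). lra. }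
  unfold TT. destruct Rle_dec as [h|h]; [|lra].
  rewrite abs_IZR in h. fold r in h.
  assert (hm : m <> 0%Z) by (intro; subst; unfold r in h; simpl in h; rewrite Rabs_R0 in h; lra).
  rewrite vv_nz by auto. fold r.
  destruct (Rle_dec 0 r).
  - rewrite Rabs_right in h by lra.
    rewrite (Rmax_left r L), (Rmax_left (r+1) L) by lra.
    assert (1 <= r) by (unfold r in *; apply IZR_le; assert (0 < m)%Z by (apply lt_IZR; simpl; lra); lia).
    assert (2 / r - 2 / (r+1) = 2 / (r * (r+1))) by (field; unfold r in *; repeat split; intro; nra).
    assert (/ r^2 <= 2 / (r * (r+1))) by (apply inv_le_div; unfold r in *; nra). lra.
  - rewrite Rabs_left in h by lra.
    rewrite (Rmax_left (1 - (r+1)) L), (Rmax_left (1 - r) L) by lra.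
    assert (r <= -1) by (unfold r in *; replace (-1) with (IZR (-1)) by auto; apply IZR_le;
      assert (m < 0)%Z by (apply lt_IZR; simpl; lra); lia).
    assert (2 / (1 - (r+1)) - 2 / (1-r) = 2 / ((-r) * (1-r))) by (field; unfold r in *; repeat split; intro; nra).
    assert (/ r^2 <= 2 / ((-r) * (1-r))) by (apply inv_le_div; unfold r in *; nra). lra.
Qed.

Lemma PhiT_range L m : 0 < L -> - (2 / L) <= PhiT L m <= 2 / L.
Proof.
  intros HL. unfold PhiT.
  assert (0 < Rmax (1 - IZR m) L) by (apply Rlt_le_trans with L; [lra|apply Rmax_r]).
  assert (0 < Rmax (IZR m) L) by (apply Rlt_le_trans with L; [lra|apply Rmax_r]).
  pose proof (inv_anti L _ HL (Rmax_r (1 - IZR m) L)).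
  pose proof (inv_anti L _ HL (Rmax_r (IZR m) L)).
  assert (0 < 2 / Rmax (1 - IZR m) L) by (unfold Rdiv; apply Rmult_lt_0_compat; [lra|apply Rinv_0_lt_compat; lra]).
  assert (0 < 2 / Rmax (IZR m) L) by (unfold Rdiv; apply Rmult_lt_0_compat; [lra|apply Rinv_0_lt_compat; lra]).
  lra.
Qed.

Lemma IS_TT a L' L : 0 < L -> IS a L' (TT L) <= 4 / L.
Proof.
  intros HL. eapply Rle_trans. apply IS_tele. intros; apply TT_tele; auto.
  pose proof (PhiT_range L (a + Z.of_nat L' + 1) HL). pose proof (PhiT_range L a HL).
  replace (4 / L) with (2 / L + 2 / L) by (field; apply Rgt_not_eq; lra). lra.
Qed.

Lemma IS_shift b l (v : Z -> R) c : IS b l (fun j => v (j + c)%Z) = IS (b + c) l v.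
Proof. unfold IS. apply sum_eq; intros; f_equal; lia. Qed.

Lemma IS_prod_bound a l b l' (u v : Z -> R) (c : Z -> Z) Bu Bv :
  (forall m, 0 <= u m) -> (forall a l, IS a l u <= Bu) -> (forall a l, IS a l v <= Bv) -> 0 <= Bv ->
  IS a l (fun i => IS b l' (fun j => u i * v (j + c i)%Z)) <= Bu * Bv.
Proof.
  intros Hu HBu HBv HBv0.
  apply Rle_trans with (IS a l (fun i => Bv * u i)).
  - apply IS_le. intros i. 
    rewrite IS_scal, IS_shift. specialize (HBv (b + c i)%Z l'). specialize (Hu i). nra.
  - rewrite IS_scal. specialize (HBu a l). 
    assert (0 <= IS a l u) by (apply IS_nonneg; auto). nra.
Qed.

Lemma IS_KK M n a l b l' : 1 <= M ->
  IS a l (fun n1 => IS b l' (fun n2 => KK M n n1 n2)) <= 4 * (5 * (48 / sqrt (M/2))).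
Proof.
  intros HM. set (L := sqrt (M/2)). assert (HL : 0 < L) by (apply sqrt_lt_R0; lra).
  assert (Hv : forall a l, IS a l vv <= 12) by apply IS_vv.
  assert (HT : forall a l, IS a l (TT L) <= 4 / L) by (intros; apply IS_TT; auto).
  assert (HT0 : 0 <= 4 / L) by (unfold Rdiv; apply Rmult_le_pos; [lra|apply Rlt_le, Rinv_0_lt_compat; lra]).
  assert (Hvn : forall m, 0 <= vv m) by (intros; apply Rlt_le, vv_pos).
  assert (HTn : forall m, 0 <= TT L m) by (intros; apply TT_nonneg).
  eapply Rle_trans.
  { apply IS_le; intros n1. apply IS_le; intros n2. apply KK_bound; auto. }
  fold L.
  rewrite (IS_ext a l _ (fun n1 => 4 * (
     IS b l' (fun n2 => TT L n1 * vv (n2 + 0)) + IS b l' (fun n2 => TT L n1 * vv (n2 + - n))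
   + IS b l' (fun n2 => vv n1 * TT L (n2 + - n)) + IS b l' (fun n2 => TT L n1 * vv (n2 + n1))
   + IS b l' (fun n2 => vv n1 * TT L (n2 + n1))))).
  2:{ intros n1. rewrite <- !IS_plus, <- IS_scal. apply IS_ext; intros n2.
      replace (n2 + 0)%Z with n2 by lia. replace (n2 + - n)%Z with (n2 - n)%Z by lia. ring. }
  rewrite IS_scal, !IS_plus.
  pose proof (IS_prod_bound a l b l' (TT L) vv (fun _ => 0%Z) (4/L) 12 HTn HT Hv ltac:(lra)).
  pose proof (IS_prod_bound a l b l' (TT L) vv (fun _ => (-n)%Z) (4/L) 12 HTn HT Hv ltac:(lra)).
  pose proof (IS_prod_bound a l b l' vv (TT L) (fun _ => (-n)%Z) 12 (4/L) Hvn Hv HT HT0).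
  pose proof (IS_prod_bound a l b l' (TT L) vv (fun i => i) (4/L) 12 HTn HT Hv ltac:(lra)).
  pose proof (IS_prod_bound a l b l' vv (TT L) (fun i => i) 12 (4/L) Hvn Hv HT HT0).
  simpl in *.
  replace (48 / L) with (4 / L * 12) by (field; lra). lra.
Qed.

Definition DS (K : nat) (f : Z -> Z -> R) : R := W K (fun i => W K (fun j => f i j)).

Lemma sq_partial_fst F K : fst (sq_partial F K) = DS K (fun i j => fst (F i j)).
Proof.
  unfold sq_partial, DS, W, IS; simpl. apply sum_eq; intros. apply sum_eq; intros.
  replace (- Z.of_nat K + Z.of_nat i)%Z with (Z.of_nat i - Z.of_nat K)%Z by lia.
  replace (- Z.of_nat K + Z.of_nat i0)%Z with (Z.of_nat i0 - Z.of_nat K)%Z by lia. auto.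
Qed.
Lemma sq_partial_snd F K : snd (sq_partial F K) = DS K (fun i j => snd (F i j)).
Proof.
  unfold sq_partial, DS, W, IS; simpl. apply sum_eq; intros. apply sum_eq; intros.
  replace (- Z.of_nat K + Z.of_nat i)%Z with (Z.of_nat i - Z.of_nat K)%Z by lia.
  replace (- Z.of_nat K + Z.of_nat i0)%Z with (Z.of_nat i0 - Z.of_nat K)%Z by lia. auto.
Qed.

Lemma DS_ext K f g : (forall i j, f i j = g i j) -> DS K f = DS K g.
Proof. intros H; unfold DS, W; apply IS_ext; intros; apply IS_ext; auto. Qed.
Lemma DS_le K f g : (forall i j, f i j <= g i j) -> DS K f <= DS K g.
Proof. intros H; unfold DS, W; apply IS_le; intros; apply IS_le; auto. Qed.
Lemma DS_nonneg K f : (forall i j, 0 <= f i j) -> 0 <= DS K f.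
Proof. intros H; unfold DS, W; apply IS_nonneg; intros; apply IS_nonneg; auto. Qed.
Lemma DS_plus K f g : DS K (fun i j => f i j + g i j) = DS K f + DS K g.
Proof. unfold DS, W. rewrite <- IS_plus. apply IS_ext; intros; apply IS_plus. Qed.
Lemma DS_scal K f c : DS K (fun i j => c * f i j) = c * DS K f.
Proof. unfold DS, W. rewrite <- IS_scal. apply IS_ext; intros; apply IS_scal. Qed.

Lemma W_mono K phi : (forall m, 0 <= phi m) -> W K phi <= W (S K) phi.
Proof. intros H; unfold W; apply IS_sub; auto; lia. Qed.

Lemma DS_mono K f : (forall i j, 0 <= f i j) -> DS K f <= DS (S K) f.
Proof.
  intros H. unfold DS. eapply Rle_trans.
  - apply IS_le; intros i. apply (W_mono K (fun j => f i j)). auto.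
  - apply W_mono. intros; unfold W; apply IS_nonneg; auto.
Qed.

Lemma Cmod_sq_partial F K : Cmod (sq_partial F K) <= DS K (fun i j => Cmod (F i j)).
Proof.
  unfold Cmod at 1, Cmod2. rewrite sq_partial_fst, sq_partial_snd. unfold DS, W.
  eapply Rle_trans. apply IS_mink. apply IS_le; intros i.
  eapply Rle_trans. apply IS_mink. apply IS_le; intros j. unfold Cmod, Cmod2. lra.
Qed.

Lemma DS_CS K u v : (forall i j, 0 <= u i j) -> (forall i j, 0 <= v i j) ->
  DS K (fun i j => u i j * v i j) <= sqrt (DS K (fun i j => u i j ^ 2)) * sqrt (DS K (fun i j => v i j ^ 2)).
Proof.
  intros Hu Hv. unfold DS, W.
  eapply Rle_trans.
  { apply IS_le; intros i. apply IS_CS'; intros; auto. }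
  set (a := (- Z.of_nat K)%Z). set (L := (2 * K)%nat).
  pose proof (IS_CS' a L (fun i => sqrt (IS a L (fun m => u i m ^ 2))) (fun i => sqrt (IS a L (fun m => v i m ^ 2)))
     (fun _ => sqrt_pos _) (fun _ => sqrt_pos _)) as H. cbv beta in H.
  rewrite (IS_ext a L (fun m => sqrt (IS a L (fun m0 => u m m0 ^ 2)) ^ 2) (fun i => IS a L (fun m => u i m ^ 2))) in H.
  rewrite (IS_ext a L (fun m => sqrt (IS a L (fun m0 => v m m0 ^ 2)) ^ 2) (fun i => IS a L (fun m => v i m ^ 2))) in H.
  exact H.
  all: intros; rewrite <- Rsqr_pow2; apply Rsqr_sqrt; apply IS_nonneg; intros; nra.
Qed.

Lemma TB (al be ga : Z -> R) A B C N K :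
  (forall m, 0 <= al m) -> (forall m, 0 <= be m) -> (forall m, 0 <= ga m) ->
  (forall a l, IS a l al <= A) -> (forall a l, IS a l be <= B) -> (forall a l, IS a l ga <= C) ->
  W N (fun n => DS K (fun n1 n2 => al n1 * be n2 * ga (n1 + n2 - n)%Z)) <= A * B * C.
Proof.
  intros Ha Hb Hg HA HB HC. unfold DS, W.
  rewrite IS_swap. rewrite (IS_ext _ _ _ (fun n1 => IS (- Z.of_nat K) (2*K) (fun n2 =>
     IS (- Z.of_nat N) (2*N) (fun n => al n1 * be n2 * ga (n1 + n2 - n)%Z)))) by (intros; apply IS_swap).
  assert (HC0 : 0 <= C) by (eapply Rle_trans; [|apply (HC 0%Z 0%nat)]; apply IS_nonneg; auto).
  assert (HB0 : 0 <= B) by (eapply Rle_trans; [|apply (HB 0%Z 0%nat)]; apply IS_nonneg; auto).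
  apply Rle_trans with (IS (- Z.of_nat K) (2*K) (fun n1 => IS (- Z.of_nat K) (2*K) (fun n2 => (al n1 * C) * be n2))).
  { apply IS_le; intros n1; apply IS_le; intros n2.
    rewrite IS_scal, IS_rev. specialize (HC (n1 + n2 - - Z.of_nat N - Z.of_nat (2 * N))%Z (2*N)%nat).
    specialize (Ha n1); specialize (Hb n2). assert (0 <= al n1 * be n2) by nra. nra. }
  apply Rle_trans with (IS (- Z.of_nat K) (2*K) (fun n1 => B * (al n1 * C))).
  { apply IS_le; intros n1. rewrite IS_scal. specialize (Ha n1). 
    assert (0 <= al n1 * C) by nra. rewrite (Rmult_comm B). apply Rmult_le_compat_l; auto. }
  rewrite IS_scal. rewrite (IS_ext _ _ _ (fun n1 => C * al n1)) by (intros; ring). rewrite IS_scal.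
  specialize (HA (- Z.of_nat K)%Z (2*K)%nat). replace (A*B*C) with ((B*C)*A) by ring.
  rewrite <- Rmult_assoc. apply Rmult_le_compat_l; nra.
Qed.

Lemma TB1 (al be ga : Z -> R) A B C n K :
  (forall m, 0 <= al m) -> (forall m, 0 <= be m) -> (forall m, 0 <= ga m) ->
  (forall a l, IS a l al <= A) -> (forall a l, IS a l be <= B) -> (forall a l, IS a l ga <= C) ->
  DS K (fun n1 n2 => al n1 * be n2 * ga (n1 + n2 - n)%Z) <= A * B * C.
Proof.
  intros Ha Hb Hg HA HB HC. unfold DS, W.
  assert (HCp : forall m, ga m <= C) by (intros m; rewrite <- (IS_0 m ga); auto).
  apply Rle_trans with (IS (- Z.of_nat K) (2*K) (fun n1 => IS (- Z.of_nat K) (2*K) (fun n2 => (al n1 * C) * be n2))).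
  { apply IS_le; intros n1; apply IS_le; intros n2.
    specialize (HCp (n1 + n2 - n)%Z). specialize (Ha n1); specialize (Hb n2). assert (0 <= al n1 * be n2) by nra. nra. }
  assert (HB0 : 0 <= B) by (eapply Rle_trans; [|apply (HB 0%Z 0%nat)]; apply IS_nonneg; auto).
  assert (HC0 : 0 <= C) by (eapply Rle_trans; [|apply (HC 0%Z 0%nat)]; apply IS_nonneg; auto).
  apply Rle_trans with (IS (- Z.of_nat K) (2*K) (fun n1 => B * (al n1 * C))).
  { apply IS_le; intros n1. rewrite IS_scal. specialize (Ha n1). 
    assert (0 <= al n1 * C) by nra. rewrite (Rmult_comm B). apply Rmult_le_compat_l; auto. }
  rewrite IS_scal. rewrite (IS_ext _ _ _ (fun n1 => C * al n1)) by (intros; ring). rewrite IS_scal.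
  specialize (HA (- Z.of_nat K)%Z (2*K)%nat). replace (A*B*C) with ((B*C)*A) by ring.
  rewrite <- Rmult_assoc. apply Rmult_le_compat_l; nra.
Qed.

Lemma KK_supp M n n1 n2 : 0 < KK M n n1 n2 -> (0 < n)%Z /\ (n < n1)%Z.
Proof.
  intros H. destruct (Classical_Prop.classic ((0 < n)%Z /\ (n2 + (n - n1 - n2) < 0)%Z /\ (n - n1 - n2 <> 0)%Z /\
    ((n1 + n2) * (n1 + (n - n1 - n2)) <> 0)%Z)) as [Hc|Hc].
  - lia.
  - rewrite KK_zero in H by auto. lra.
Qed.

Definition Wt s (n n1 n2 : Z) : R := rho s n1 * rho s n2 * rho s (n1 + n2 - n).

Lemma Wt_ge1 s n n1 n2 : 0 <= s -> 1 <= Wt s n n1 n2.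
Proof.
  intros Hs. unfold Wt. pose proof (rho_ge1 s n1 Hs). pose proof (rho_ge1 s n2 Hs).
  pose proof (rho_ge1 s (n1 + n2 - n) Hs). assert (1 <= rho s n1 * rho s n2) by nra. nra.
Qed.

Definition CKM (M : R) := 4 * (5 * (48 / sqrt (M/2))).

Lemma CKM_pos M : 1 <= M -> 0 < CKM M.
Proof.
  intros. unfold CKM. assert (0 < sqrt (M/2)) by (apply sqrt_lt_R0; lra).
  assert (0 < 48 / sqrt (M/2)) by (unfold Rdiv; apply Rmult_lt_0_compat; [lra|apply Rinv_0_lt_compat; lra]). lra.
Qed.

Definition GG s (f g h : Z -> Cx) n K := DS K (fun n1 n2 => gw s f n1 * gw s g n2 * gw s h (n1 + n2 - n)%Z).

Lemma GG_nonneg s f g h n K : 0 <= s -> 0 <= GG s f g h n K.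
Proof.
  intros Hs. apply DS_nonneg; intros. pose proof (gw_nonneg s f i Hs). pose proof (gw_nonneg s g j Hs).
  pose proof (gw_nonneg s h (i + j - n)%Z Hs). apply Rmult_le_pos; [apply Rmult_le_pos|]; auto.
Qed.

Lemma piece s M n f g h K : 0 <= s -> 1 <= M ->
  DS K (fun n1 n2 => sqrt (KK M n n1 n2) * (Cmod (f n1) * Cmod (g n2) * Cmod (h (n1 + n2 - n)%Z)))
  <= sqrt (DS K (fun n1 n2 => KK M n n1 n2 / Wt s n n1 n2)) * sqrt (GG s f g h n K).
Proof.
  intros Hs HM.
  assert (HW : forall n1 n2, 0 < Wt s n n1 n2) by (intros; pose proof (Wt_ge1 s n n1 n2 Hs); lra).
  assert (HK : forall n1 n2, 0 <= KK M n n1 n2) by (intros; apply KK_nonneg; lra).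
  set (u := fun n1 n2 => sqrt (KK M n n1 n2 / Wt s n n1 n2)).
  set (v := fun n1 n2 => sqrt (Wt s n n1 n2) * (Cmod (f n1) * Cmod (g n2) * Cmod (h (n1 + n2 - n)%Z))).
  assert (Hu : forall i j, 0 <= u i j) by (intros; apply sqrt_pos).
  assert (Hv : forall i j, 0 <= v i j).
  { intros; unfold v. apply Rmult_le_pos; [apply sqrt_pos|]. 
    pose proof (Cmod_nonneg (f i)); pose proof (Cmod_nonneg (g j)); pose proof (Cmod_nonneg (h (i+j-n)%Z)).
    apply Rmult_le_pos; [apply Rmult_le_pos|]; auto. }
  pose proof (DS_CS K u v Hu Hv) as H.
  rewrite (DS_ext K (fun i j => u i j * v i j)
     (fun n1 n2 => sqrt (KK M n n1 n2) * (Cmod (f n1) * Cmod (g n2) * Cmod (h (n1 + n2 - n)%Z)))) in H.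
  rewrite (DS_ext K (fun i j => u i j ^ 2) (fun n1 n2 => KK M n n1 n2 / Wt s n n1 n2)) in H.
  rewrite (DS_ext K (fun i j => v i j ^ 2)
     (fun n1 n2 => gw s f n1 * gw s g n2 * gw s h (n1 + n2 - n)%Z)) in H.
  exact H.
  - intros i j. unfold v, gw, Wt. rewrite <- !Cmod_sq.
    rewrite Rpow_mult_distr, <- Rsqr_pow2, Rsqr_sqrt. ring.
    pose proof (HW i j). unfold Wt in H0. lra.
  - intros i j. unfold u. rewrite <- Rsqr_pow2, Rsqr_sqrt. auto.
    unfold Rdiv. apply Rmult_le_pos; auto. apply Rlt_le, Rinv_0_lt_compat; auto.
  - intros i j. unfold u, v. rewrite <- Rmult_assoc, <- sqrt_mult.
    + f_equal. f_equal. field. pose proof (HW i j); lra.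
    + unfold Rdiv. apply Rmult_le_pos; auto. apply Rlt_le, Rinv_0_lt_compat; auto.
    + apply Rlt_le; auto.
Qed.

Lemma KKW_bound s M n n1 n2 : 0 <= s -> 1 <= M ->
  rho s n * (KK M n n1 n2 / Wt s n n1 n2) <= KK M n n1 n2.
Proof.
  intros Hs HM. pose proof (KK_nonneg M n n1 n2 ltac:(lra)) as HK.
  pose proof (Wt_ge1 s n n1 n2 Hs) as HW.
  destruct HK as [HK|HK]; [| rewrite <- HK; unfold Rdiv; lra].
  destruct (KK_supp M n n1 n2 HK) as [h1 h2].
  assert (rho s n <= Wt s n n1 n2).
  { unfold Wt. pose proof (rho_mono s n n1 Hs ltac:(lia)).
    pose proof (rho_ge1 s n2 Hs). pose proof (rho_ge1 s (n1 + n2 - n) Hs). pose proof (rho_ge1 s n1 Hs).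
    assert (rho s n1 <= rho s n1 * rho s n2) by nra. nra. }
  assert (0 <= rho s n) by (apply rho_pos; auto).
  replace (rho s n * (KK M n n1 n2 / Wt s n n1 n2)) with ((rho s n / Wt s n n1 n2) * KK M n n1 n2) by (field; lra).
  assert (rho s n / Wt s n n1 n2 <= 1).
  { unfold Rdiv. apply (Rmult_le_reg_r (Wt s n n1 n2)); [lra|]. rewrite Rmult_assoc, Rinv_l by lra. lra. }
  nra.
Qed.

Lemma core s M n F f1 g1 h1 f2 g2 h2 f3 g3 h3 K : 0 <= s -> 1 <= M ->
  (forall n1 n2, Cmod (F n1 n2) <= sqrt (KK M n n1 n2) *
     (Cmod (f1 n1) * Cmod (g1 n2) * Cmod (h1 (n1 + n2 - n)%Z)
    + Cmod (f2 n1) * Cmod (g2 n2) * Cmod (h2 (n1 + n2 - n)%Z)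
    + Cmod (f3 n1) * Cmod (g3 n2) * Cmod (h3 (n1 + n2 - n)%Z))) ->
  rho s n * Cmod2 (sq_partial F K) <= CKM M * (3 * (GG s f1 g1 h1 n K + GG s f2 g2 h2 n K + GG s f3 g3 h3 n K))
  /\ DS K (fun i j => Cmod (F i j)) <= sqrt (CKM M) *
       (sqrt (GG s f1 g1 h1 n K) + sqrt (GG s f2 g2 h2 n K) + sqrt (GG s f3 g3 h3 n K)).
Proof.
  intros Hs HM HF.
  set (X := DS K (fun n1 n2 => KK M n n1 n2 / Wt s n n1 n2)).
  assert (HX0 : 0 <= X).
  { apply DS_nonneg; intros. unfold Rdiv. apply Rmult_le_pos. apply KK_nonneg; lra.
    apply Rlt_le, Rinv_0_lt_compat. pose proof (Wt_ge1 s n i j Hs); lra. }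
  assert (HXr : rho s n * X <= CKM M).
  { unfold X. rewrite <- DS_scal. eapply Rle_trans. apply DS_le. intros; apply KKW_bound; auto.
    apply IS_KK; auto. }
  assert (HX : X <= CKM M).
  { pose proof (rho_ge1 s n Hs). nra. }
  set (G1 := GG s f1 g1 h1 n K). set (G2 := GG s f2 g2 h2 n K). set (G3 := GG s f3 g3 h3 n K).
  assert (HS : DS K (fun i j => Cmod (F i j)) <= sqrt X * (sqrt G1 + sqrt G2 + sqrt G3)).
  { eapply Rle_trans. apply DS_le. apply HF.
    rewrite (DS_ext K _ (fun n1 n2 => 
       (sqrt (KK M n n1 n2) * (Cmod (f1 n1) * Cmod (g1 n2) * Cmod (h1 (n1 + n2 - n)%Z))
      + sqrt (KK M n n1 n2) * (Cmod (f2 n1) * Cmod (g2 n2) * Cmod (h2 (n1 + n2 - n)%Z)))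
      + sqrt (KK M n n1 n2) * (Cmod (f3 n1) * Cmod (g3 n2) * Cmod (h3 (n1 + n2 - n)%Z)))) by (intros; ring).
    rewrite !DS_plus.
    pose proof (piece s M n f1 g1 h1 K Hs HM). pose proof (piece s M n f2 g2 h2 K Hs HM).
    pose proof (piece s M n f3 g3 h3 K Hs HM). fold X G1 G2 G3 in H, H0, H1. lra. }
  split.
  - assert (Hc : Cmod (sq_partial F K) <= sqrt X * (sqrt G1 + sqrt G2 + sqrt G3)).
    { eapply Rle_trans. apply Cmod_sq_partial. auto. }
    rewrite <- Cmod_sq.
    pose proof (Cmod_nonneg (sq_partial F K)).
    set (S := sqrt G1 + sqrt G2 + sqrt G3) in *.
    assert (HS0 : 0 <= S) by (unfold S; pose proof (sqrt_pos G1); pose proof (sqrt_pos G2); pose proof (sqrt_pos G3); lra).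
    assert (Cmod (sq_partial F K) ^ 2 <= X * S ^ 2).
    { pose proof (sqrt_pos X). pose proof (sqrt_sqrt X HX0).
      assert (Cmod (sq_partial F K) ^ 2 <= (sqrt X * S)^2).
      { apply pow_incr; auto. }
      replace ((sqrt X * S)^2) with ((sqrt X * sqrt X) * S^2) in H2 by ring. rewrite H1 in H2. auto. }
    assert (S ^ 2 <= 3 * (G1 + G2 + G3)).
    { unfold S. pose proof (sqrt_sqrt G1 (GG_nonneg _ _ _ _ _ _ Hs)).
      pose proof (sqrt_sqrt G2 (GG_nonneg _ _ _ _ _ _ Hs)). pose proof (sqrt_sqrt G3 (GG_nonneg _ _ _ _ _ _ Hs)).
      pose proof (pow2_ge_0 (sqrt G1 - sqrt G2)). pose proof (pow2_ge_0 (sqrt G1 - sqrt G3)).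
      pose proof (pow2_ge_0 (sqrt G2 - sqrt G3)). nra. }
    pose proof (rho_pos s n Hs). pose proof (CKM_pos M HM).
    apply Rle_trans with (rho s n * (X * S ^ 2)). apply Rmult_le_compat_l; auto.
    replace (rho s n * (X * S ^ 2)) with ((rho s n * X) * S^2) by ring.
    apply Rle_trans with (CKM M * S ^ 2). apply Rmult_le_compat_r; auto. apply pow2_ge_0.
    apply Rmult_le_compat_l; lra.
  - eapply Rle_trans. exact HS. apply Rmult_le_compat_r.
    pose proof (sqrt_pos G1); pose proof (sqrt_pos G2); pose proof (sqrt_pos G3); lra.
    apply sqrt_le_1_alt; auto.
Qed.

Lemma fst_le_Cmod z : Rabs (fst z) <= Cmod z.
Proof.
  unfold Cmod, Cmod2. rewrite <- (sqrt_pow2 (Rabs _)) by apply Rabs_pos. apply sqrt_le_1_alt.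
  rewrite pow2_abs. pose proof (pow2_ge_0 (snd z)). lra.
Qed.
Lemma snd_le_Cmod z : Rabs (snd z) <= Cmod z.
Proof.
  unfold Cmod, Cmod2. rewrite <- (sqrt_pow2 (Rabs _)) by apply Rabs_pos. apply sqrt_le_1_alt.
  rewrite pow2_abs. pose proof (pow2_ge_0 (fst z)). lra.
Qed.

Lemma mono_cv (U : nat -> R) B : (forall K, U K <= U (S K)) -> (forall K, U K <= B) -> exists l, Un_cv U l.
Proof.
  intros H1 H2. destruct (growing_cv U H1) as [l Hl]. exists B. intros x [i ->]; auto. eauto.
Qed.

Lemma part_cv (F : Z -> Z -> Cx) (sel : Cx -> R) B :
  (forall z, Rabs (sel z) <= Cmod z) -> (forall K, DS K (fun i j => Cmod (F i j)) <= B) ->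
  exists l, Un_cv (fun K => DS K (fun i j => sel (F i j))) l.
Proof.
  intros Hs HB.
  assert (H0 : forall i j, 0 <= sel (F i j) + Cmod (F i j)).
  { intros. specialize (Hs (F i j)). unfold Rabs in Hs; destruct Rcase_abs; lra. }
  assert (H1 : forall i j, 0 <= Cmod (F i j)) by (intros; apply Cmod_nonneg).
  destruct (mono_cv (fun K => DS K (fun i j => sel (F i j) + Cmod (F i j))) (2 * B)) as [l1 Hl1].
  { intros; apply DS_mono; auto. }
  { intros K. specialize (HB K). assert (DS K (fun i j => sel (F i j) + Cmod (F i j)) <= DS K (fun i j => 2 * Cmod (F i j))).
    { apply DS_le; intros. specialize (Hs (F i j)). unfold Rabs in Hs; destruct Rcase_abs; lra. }
    rewrite DS_scal in H. lra. }
  destruct (mono_cv (fun K => DS K (fun i j => Cmod (F i j))) B) as [l2 Hl2].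
  { intros; apply DS_mono; auto. }
  { auto. }
  exists (l1 - l2). 
  assert (Un_cv (fun K => DS K (fun i j => sel (F i j) + Cmod (F i j)) - DS K (fun i j => Cmod (F i j))) (l1 - l2))
    by (apply CV_minus; auto).
  intros eps Heps. destruct (H eps Heps) as [N HN]. exists N. intros k Hk. specialize (HN k Hk).
  rewrite DS_plus in HN. replace (DS k (fun i j => sel (F i j)) + DS k (fun i j => Cmod (F i j)) - DS k (fun i j => Cmod (F i j)))
    with (DS k (fun i j => sel (F i j))) in HN by ring. auto.
Qed.

Lemma Csum2_cv F B : (forall K, DS K (fun i j => Cmod (F i j)) <= B) ->
  Un_cv (fun K => fst (sq_partial F K)) (fst (Csum2 F)) /\
  Un_cv (fun K => snd (sq_partial F K)) (snd (Csum2 F)).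
Proof.
  intros HB. unfold Csum2. apply epsilon_spec.
  destruct (part_cv F fst B fst_le_Cmod HB) as [l1 H1].
  destruct (part_cv F snd B snd_le_Cmod HB) as [l2 H2].
  exists (l1, l2). split.
  - intros eps He; destruct (H1 eps He) as [N HN]; exists N; intros; rewrite sq_partial_fst; auto.
  - intros eps He; destruct (H2 eps He) as [N HN]; exists N; intros; rewrite sq_partial_snd; auto.
Qed.

Lemma Cmod2_cv (u : nat -> Cx) l : Un_cv (fun K => fst (u K)) (fst l) -> Un_cv (fun K => snd (u K)) (snd l) ->
  Un_cv (fun K => Cmod2 (u K)) (Cmod2 l).
Proof.
  intros H1 H2.
  intros eps He. destruct (CV_plus _ _ _ _ (CV_mult _ _ _ _ H1 H1) (CV_mult _ _ _ _ H2 H2) eps He) as [N HN].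
  exists N; intros k Hk. specialize (HN k Hk). cbv beta in HN.
  assert (E1 : Cmod2 (u k) = fst (u k) * fst (u k) + snd (u k) * snd (u k)) by (unfold Cmod2; ring).
  assert (E2 : Cmod2 l = fst l * fst l + snd l * snd l) by (unfold Cmod2; ring).
  rewrite E1, E2. exact HN.
Qed.

Lemma IS_cv a L (u : Z -> nat -> R) (l : Z -> R) : (forall m, Un_cv (u m) (l m)) ->
  Un_cv (fun K => IS a L (fun m => u m K)) (IS a L l).
Proof.
  intros H. induction L.
  - intros eps He. destruct (H a eps He) as [N HN]. exists N. intros k Hk. rewrite !IS_0. auto.
  - intros eps He. destruct (CV_plus _ _ _ _ IHL (H (a + Z.of_nat (S L))%Z) eps He) as [N HN].
    exists N. intros k Hk. rewrite !IS_S. apply HN; auto.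
Qed.

Lemma est_gen s M (F : Z -> Z -> Z -> Cx) (V : Z -> Cx) f1 g1 h1 f2 g2 h2 f3 g3 h3 A1 B1 C1 A2 B2 C2 A3 B3 C3 :
  0 <= s -> 1 <= M ->
  (forall n, (0 < n)%Z -> (exists B, forall K, DS K (fun i j => Cmod (F n i j)) <= B) ->
     Un_cv (fun K => fst (sq_partial (F n) K)) (fst (V n)) /\ Un_cv (fun K => snd (sq_partial (F n) K)) (snd (V n))) ->
  (forall n, (n <= 0)%Z -> V n = C0) ->
  (forall n n1 n2, Cmod (F n n1 n2) <= sqrt (KK M n n1 n2) *
     (Cmod (f1 n1) * Cmod (g1 n2) * Cmod (h1 (n1 + n2 - n)%Z)
    + Cmod (f2 n1) * Cmod (g2 n2) * Cmod (h2 (n1 + n2 - n)%Z)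
    + Cmod (f3 n1) * Cmod (g3 n2) * Cmod (h3 (n1 + n2 - n)%Z))) ->
  (forall a l, IS a l (gw s f1) <= A1) -> (forall a l, IS a l (gw s g1) <= B1) -> (forall a l, IS a l (gw s h1) <= C1) ->
  (forall a l, IS a l (gw s f2) <= A2) -> (forall a l, IS a l (gw s g2) <= B2) -> (forall a l, IS a l (gw s h2) <= C2) ->
  (forall a l, IS a l (gw s f3) <= A3) -> (forall a l, IS a l (gw s g3) <= B3) -> (forall a l, IS a l (gw s h3) <= C3) ->
  forall N, W N (gw s V) <= CKM M * (3 * (A1 * B1 * C1 + A2 * B2 * C2 + A3 * B3 * C3)).
Proof.
  intros Hs HM HV1 HV2 HF HA1 HB1 HC1 HA2 HB2 HC2 HA3 HB3 HC3 N.
  assert (Hg : forall f m, 0 <= gw s f m) by (intros; apply gw_nonneg; auto).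
  set (G := fun n K => GG s f1 g1 h1 n K + GG s f2 g2 h2 n K + GG s f3 g3 h3 n K).
  set (p := fun n K => rho s n * Cmod2 (if (0 <? n)%Z then sq_partial (F n) K else C0)).
  assert (Hp : forall n K, p n K <= CKM M * (3 * G n K)).
  { intros n K. unfold p. destruct (Z.ltb_spec 0 n).
    - apply (core s M n (F n) f1 g1 h1 f2 g2 h2 f3 g3 h3 K Hs HM (HF n)).
    - rewrite Cmod2_C0, Rmult_0_r. pose proof (CKM_pos M HM).
      unfold G. pose proof (GG_nonneg s f1 g1 h1 n K Hs). pose proof (GG_nonneg s f2 g2 h2 n K Hs).
      pose proof (GG_nonneg s f3 g3 h3 n K Hs). nra. }
  assert (HGG : forall f g h A B C n K, (forall a l, IS a l (gw s f) <= A) -> (forall a l, IS a l (gw s g) <= B) ->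
     (forall a l, IS a l (gw s h) <= C) -> GG s f g h n K <= A * B * C).
  { intros. unfold GG. apply TB1; auto. }
  assert (Hcv : forall n, Un_cv (p n) (gw s V n)).
  { intros n. unfold p, gw. destruct (Z.ltb_spec 0 n).
    - set (B := sqrt (CKM M) * (sqrt (A1*B1*C1) + sqrt (A2*B2*C2) + sqrt (A3*B3*C3))).
      assert (HB : forall K, DS K (fun i j => Cmod (F n i j)) <= B).
      { intros K. destruct (core s M n (F n) f1 g1 h1 f2 g2 h2 f3 g3 h3 K Hs HM (HF n)) as [_ H2].
        eapply Rle_trans; [exact H2|]. unfold B. apply Rmult_le_compat_l. apply sqrt_pos.
        pose proof (sqrt_le_1_alt _ _ (HGG f1 g1 h1 A1 B1 C1 n K HA1 HB1 HC1)).
        pose proof (sqrt_le_1_alt _ _ (HGG f2 g2 h2 A2 B2 C2 n K HA2 HB2 HC2)).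
        pose proof (sqrt_le_1_alt _ _ (HGG f3 g3 h3 A3 B3 C3 n K HA3 HB3 HC3)). lra. }
      destruct (HV1 n ltac:(lia) (ex_intro _ B HB)) as [H1 H2].
      pose proof (Cmod2_cv _ _ H1 H2) as H3.
      intros eps He. 
      assert (0 <= rho s n) by (apply rho_pos; auto).
      destruct (CV_mult _ _ _ _ (fun e he => ex_intro _ 0%nat (fun k _ => ltac:(unfold Rdist; rewrite Rminus_diag, Rabs_R0; exact he) : Rdist (rho s n) (rho s n) < e)) H3 eps He) as [N0 HN0].
      exists N0. intros. apply HN0. auto.
    - rewrite HV2 by auto. intros eps He. exists 0%nat. intros. unfold Rdist. rewrite Rminus_diag, Rabs_R0. auto. }
  apply Rle_cv_lim with (Un := fun K => W N (fun n => p n K)) (Vn := fun _ => CKM M * (3 * (A1 * B1 * C1 + A2 * B2 * C2 + A3 * B3 * C3))).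
  - intros K. eapply Rle_trans. unfold W. apply IS_le. intros n. apply Hp.
    rewrite IS_scal, IS_scal. pose proof (CKM_pos M HM). apply Rmult_le_compat_l; [lra|]. 
    apply Rmult_le_compat_l; [lra|]. unfold G. rewrite !IS_plus.
    pose proof (TB _ _ _ A1 B1 C1 N K (Hg f1) (Hg g1) (Hg h1) HA1 HB1 HC1).
    pose proof (TB _ _ _ A2 B2 C2 N K (Hg f2) (Hg g2) (Hg h2) HA2 HB2 HC2).
    pose proof (TB _ _ _ A3 B3 C3 N K (Hg f3) (Hg g3) (Hg h3) HA3 HB3 HC3).
    unfold W, GG in *. lra.
  - apply IS_cv. auto.
  - intros eps He. exists 0%nat. intros. unfold Rdist. rewrite Rminus_diag, Rabs_R0. auto.
Qed.

Definition z0 : Z -> Cx := fun _ => C0.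
Lemma Cmod_C0 : Cmod C0 = 0.
Proof. unfold Cmod; rewrite Cmod2_C0; apply sqrt_0. Qed.
Lemma gw_z0 s m : gw s z0 m = 0.
Proof. unfold gw, z0; rewrite Cmod2_C0; ring. Qed.
Lemma IS_z0 s a l : IS a l (gw s z0) <= 0.
Proof. rewrite (IS_ext a l _ (fun _ => 0 * 0)) by (intros; rewrite gw_z0; ring). rewrite IS_scal. lra. Qed.

Lemma Cmul_assoc a b c : Cmul a (Cmul b c) = Cmul (Cmul a b) c.
Proof. destruct a, b, c; unfold Cmul; simpl; f_equal; ring. Qed.

Definition Ecoef (t : R) (n n1 n2 : Z) : Cx :=
  Cmul (Copp Ci) (Cdiv (Cmul (Cexpi (t * IZR (Phi n n1 n2 (n - n1 - n2)))) (m1t n n1 n2 (n - n1 - n2)))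
     (RtoC (IZR (Phi n n1 n2 (n - n1 - n2))))).

Lemma N0_unfold M w t n n1 n2 : N0_term M w t n n1 n2 =
  if Rlt_dec M (IZR (Z.abs (Phi n n1 n2 (n - n1 - n2)))) then
    Cmul (Ecoef t n n1 n2) (Cmul (Cmul (w t n1) (w t n2)) (Cconj (w t (n1 + n2 - n)%Z))) else C0.
Proof.
  unfold N0_term, wstar, Ecoef. replace (- (n - n1 - n2))%Z with (n1 + n2 - n)%Z by ring.
  destruct Rlt_dec; [|reflexivity]. apply Cmul_assoc.
Qed.

Lemma Cmod_Ecoef M t n n1 n2 : 0 <= M -> M < IZR (Z.abs (Phi n n1 n2 (n - n1 - n2))) ->
  Cmod (Ecoef t n n1 n2) = sqrt (KK M n n1 n2).
Proof.
  intros HM H. unfold Cmod, KK. destruct Rlt_dec; [|contradiction]. f_equal.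
  assert (IZR (Phi n n1 n2 (n - n1 - n2)) <> 0).
  { intros E. apply eq_IZR_R0 in E. rewrite E in H. simpl in H. lra. }
  unfold Ecoef. rewrite Cmod2_mul, Cmod2_opp, Cmod2_Ci, Cmod2_div, Cmod2_mul, Cmod2_expi, Cmod2_RtoC.
  field; auto. rewrite Cmod2_RtoC. apply Rgt_not_eq. apply sq_pos; auto.
Qed.

Lemma Cmod_conj z : Cmod (Cconj z) = Cmod z.
Proof. unfold Cmod; rewrite Cmod2_conj; auto. Qed.

Lemma PB1 M w t n n1 n2 : 0 <= M ->
  Cmod (N0_term M w t n n1 n2) <= sqrt (KK M n n1 n2) *
    (Cmod (w t n1) * Cmod (w t n2) * Cmod (w t (n1 + n2 - n)%Z)
   + Cmod (z0 n1) * Cmod (z0 n2) * Cmod (z0 (n1 + n2 - n)%Z)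
   + Cmod (z0 n1) * Cmod (z0 n2) * Cmod (z0 (n1 + n2 - n)%Z)).
Proof.
  intros HM. unfold z0. rewrite Cmod_C0. rewrite N0_unfold. destruct Rlt_dec as [h|h].
  - rewrite !Cmod_mul, Cmod_conj, (Cmod_Ecoef M) by auto. lra.
  - rewrite Cmod_C0. apply Rmult_le_pos. apply sqrt_pos.
    pose proof (Cmod_nonneg (w t n1)). pose proof (Cmod_nonneg (w t n2)). pose proof (Cmod_nonneg (w t (n1+n2-n)%Z)).
    assert (0 <= Cmod (w t n1) * Cmod (w t n2)) by nra. nra.
Qed.

Lemma tri_id a1 a2 a3 b1 b2 b3 :
  Csub (Cmul (Cmul a1 a2) (Cconj a3)) (Cmul (Cmul b1 b2) (Cconj b3)) =
  Cadd (Cadd (Cmul (Cmul (Csub a1 b1) a2) (Cconj a3)) (Cmul (Cmul b1 (Csub a2 b2)) (Cconj a3)))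
       (Cmul (Cmul b1 b2) (Cconj (Csub a3 b3))).
Proof.
  destruct a1, a2, a3, b1, b2, b3. unfold Csub, Cadd, Cmul, Cconj, Copp; simpl. f_equal; ring.
Qed.

Lemma PB2 M w wt t n n1 n2 : 0 <= M ->
  Cmod (Csub (N0_term M w t n n1 n2) (N0_term M wt t n n1 n2)) <= sqrt (KK M n n1 n2) *
    (Cmod (Csub (w t n1) (wt t n1)) * Cmod (w t n2) * Cmod (w t (n1 + n2 - n)%Z)
   + Cmod (wt t n1) * Cmod (Csub (w t n2) (wt t n2)) * Cmod (w t (n1 + n2 - n)%Z)
   + Cmod (wt t n1) * Cmod (wt t n2) * Cmod (Csub (w t (n1 + n2 - n)%Z) (wt t (n1 + n2 - n)%Z))).
Proof.
  intros HM. rewrite !N0_unfold. destruct Rlt_dec as [h|h].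
  - replace (Csub (Cmul (Ecoef t n n1 n2) (Cmul (Cmul (w t n1) (w t n2)) (Cconj (w t (n1 + n2 - n)%Z))))
      (Cmul (Ecoef t n n1 n2) (Cmul (Cmul (wt t n1) (wt t n2)) (Cconj (wt t (n1 + n2 - n)%Z)))))
     with (Cmul (Ecoef t n n1 n2) (Csub (Cmul (Cmul (w t n1) (w t n2)) (Cconj (w t (n1 + n2 - n)%Z)))
        (Cmul (Cmul (wt t n1) (wt t n2)) (Cconj (wt t (n1 + n2 - n)%Z))))).
    2:{ set (E := Ecoef t n n1 n2). set (X := Cmul (Cmul (w t n1) (w t n2)) (Cconj (w t (n1 + n2 - n)%Z))).
        set (Y := Cmul (Cmul (wt t n1) (wt t n2)) (Cconj (wt t (n1 + n2 - n)%Z))).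
        destruct E, X, Y. unfold Csub, Cadd, Cmul, Copp; simpl. f_equal; ring. }
    rewrite Cmod_mul, (Cmod_Ecoef M) by auto. apply Rmult_le_compat_l. apply sqrt_pos.
    rewrite tri_id. eapply Rle_trans. apply Cmod_add. eapply Rle_trans. apply Rplus_le_compat_r. apply Cmod_add.
    rewrite !Cmod_mul, !Cmod_conj. lra.
  - unfold Csub.
    replace (Cadd C0 (Copp C0)) with C0 by (unfold Cadd, Copp, C0; simpl; f_equal; ring).
    rewrite Cmod_C0. apply Rmult_le_pos. apply sqrt_pos.
    repeat apply Rplus_le_le_0_compat; repeat apply Rmult_le_pos; apply Cmod_nonneg.
Qed.

Lemma calN0_pos M w t n : (0 < n)%Z -> calN0 M w t n = Csum2 (fun n1 n2 => N0_term M w t n n1 n2).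
Proof. intros h. unfold calN0. replace (0 <? n)%Z with true by (symmetry; apply Z.ltb_lt; auto). auto. Qed.
Lemma calN0_neg M w t n : (n <= 0)%Z -> calN0 M w t n = C0.
Proof. intros h. unfold calN0. replace (0 <? n)%Z with false by (symmetry; apply Z.ltb_ge; auto). auto. Qed.

Lemma conv_N0 s M w t n : 0 <= s -> 1 <= M -> in_l2s s (w t) -> (0 < n)%Z ->
  Un_cv (fun K => fst (sq_partial (fun n1 n2 => N0_term M w t n n1 n2) K)) (fst (calN0 M w t n)) /\
  Un_cv (fun K => snd (sq_partial (fun n1 n2 => N0_term M w t n n1 n2) K)) (snd (calN0 M w t n)).
Proof.
  intros Hs HM Hw h. rewrite calN0_pos by auto. apply Csum2_cv with
    (B := sqrt (CKM M) * (sqrt (l2s_norm s (w t) ^ 2 * l2s_norm s (w t) ^ 2 * l2s_norm s (w t) ^ 2) + sqrt (0*0*0) + sqrt (0*0*0))).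
  intros K. destruct (core s M n (fun n1 n2 => N0_term M w t n n1 n2) (w t) (w t) (w t) z0 z0 z0 z0 z0 z0 K Hs HM
    (fun n1 n2 => PB1 M w t n n1 n2 ltac:(lra))) as [_ H].
  eapply Rle_trans; [exact H|]. apply Rmult_le_compat_l; [apply sqrt_pos|].
  assert (Hg : forall f m, 0 <= gw s f m) by (intros; apply gw_nonneg; auto).
  assert (HA : forall a l, IS a l (gw s (w t)) <= l2s_norm s (w t) ^ 2) by (intros; apply l2s_IS; auto).
  assert (HZ : forall a l, IS a l (gw s z0) <= 0) by (intros; apply IS_z0).
  pose proof (sqrt_le_1_alt _ _ (TB1 _ _ _ _ _ _ n K (Hg _) (Hg _) (Hg _) HA HA HA)).
  pose proof (sqrt_le_1_alt _ _ (TB1 _ _ _ _ _ _ n K (Hg _) (Hg _) (Hg _) HZ HZ HZ)).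
  unfold GG. lra.
Qed.

Lemma estA s M w t : 0 <= s -> 1 <= M -> in_l2s s (w t) ->
  forall N, W N (gw s (calN0 M w t)) <= CKM M * (3 * (l2s_norm s (w t) ^ 2 * l2s_norm s (w t) ^ 2 * l2s_norm s (w t) ^ 2 + 0*0*0 + 0*0*0)).
Proof.
  intros Hs HM Hw. apply (est_gen s M (fun n n1 n2 => N0_term M w t n n1 n2) (calN0 M w t)
    (w t) (w t) (w t) z0 z0 z0 z0 z0 z0); auto.
  all: try (intros a l; apply l2s_IS; now auto).
  all: try (intros a l; apply IS_z0).
  - intros n h _. apply (conv_N0 s); auto.
  - intros; apply calN0_neg; auto.
  - intros. apply PB1; lra.
Qed.

Lemma estB s M w wt t : 0 <= s -> 1 <= M -> in_l2s s (w t) -> in_l2s s (wt t) ->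
  in_l2s s (fun k => Csub (w t k) (wt t k)) ->
  forall N, W N (gw s (fun n => Csub (calN0 M w t n) (calN0 M wt t n))) <= CKM M * (3 *
    (l2s_norm s (fun k => Csub (w t k) (wt t k)) ^ 2 * l2s_norm s (w t) ^ 2 * l2s_norm s (w t) ^ 2
   + l2s_norm s (wt t) ^ 2 * l2s_norm s (fun k => Csub (w t k) (wt t k)) ^ 2 * l2s_norm s (w t) ^ 2
   + l2s_norm s (wt t) ^ 2 * l2s_norm s (wt t) ^ 2 * l2s_norm s (fun k => Csub (w t k) (wt t k)) ^ 2)).
Proof.
  intros Hs HM Hw Hwt Hd. apply (est_gen s M (fun n n1 n2 => Csub (N0_term M w t n n1 n2) (N0_term M wt t n n1 n2))
    (fun n => Csub (calN0 M w t n) (calN0 M wt t n))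
    (fun k => Csub (w t k) (wt t k)) (w t) (w t) (wt t) (fun k => Csub (w t k) (wt t k)) (w t)
    (wt t) (wt t) (fun k => Csub (w t k) (wt t k))); auto.
  all: try (intros a l; apply l2s_IS; now auto).
  - intros n h _. destruct (conv_N0 s M w t n Hs HM Hw h) as [H1 H2].
    destruct (conv_N0 s M wt t n Hs HM Hwt h) as [H3 H4].
    assert (E1 : forall K, fst (sq_partial (fun n1 n2 => Csub (N0_term M w t n n1 n2) (N0_term M wt t n n1 n2)) K)
       = fst (sq_partial (fun n1 n2 => N0_term M w t n n1 n2) K) - fst (sq_partial (fun n1 n2 => N0_term M wt t n n1 n2) K)).
    { intros K. rewrite !sq_partial_fst. unfold Rminus. rewrite <- (Rmult_1_l (DS K (fun i j => fst (N0_term M wt t n i j)))).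
      rewrite Ropp_mult_distr_l, <- DS_scal, <- DS_plus. apply DS_ext. intros. unfold Csub, Cadd, Copp; simpl. ring. }
    assert (E2 : forall K, snd (sq_partial (fun n1 n2 => Csub (N0_term M w t n n1 n2) (N0_term M wt t n n1 n2)) K)
       = snd (sq_partial (fun n1 n2 => N0_term M w t n n1 n2) K) - snd (sq_partial (fun n1 n2 => N0_term M wt t n n1 n2) K)).
    { intros K. rewrite !sq_partial_snd. unfold Rminus. rewrite <- (Rmult_1_l (DS K (fun i j => snd (N0_term M wt t n i j)))).
      rewrite Ropp_mult_distr_l, <- DS_scal, <- DS_plus. apply DS_ext. intros. unfold Csub, Cadd, Copp; simpl. ring. }
    split.
    + intros eps He. destruct (CV_minus _ _ _ _ H1 H3 eps He) as [N0 HN]. exists N0. intros k Hk. rewrite E1.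
      unfold Csub, Cadd, Copp. simpl. apply HN; auto.
    + intros eps He. destruct (CV_minus _ _ _ _ H2 H4 eps He) as [N0 HN]. exists N0. intros k Hk. rewrite E2.
      unfold Csub, Cadd, Copp. simpl. apply HN; auto.
  - intros. rewrite !calN0_neg by auto. unfold Csub, Cadd, Copp, C0; simpl; f_equal; ring.
  - intros. apply PB2; lra.
Qed.

Definition K0 := sqrt (2880 * sqrt 2).

Lemma Rpow14 M : 1 <= M -> Rpower M (- / 4) = / sqrt (sqrt M).
Proof.
  intros HM. rewrite Rpower_Ropp. f_equal.
  rewrite <- (Rpower_sqrt M) by lra. rewrite <- (Rpower_sqrt (Rpower M (/2))) by (unfold Rpower; apply exp_pos).
  rewrite Rpower_mult. f_equal. field.
Qed.

Lemma CKM_sqrt M X : 1 <= M -> 0 <= X -> sqrt (CKM M * (3 * X)) = K0 * Rpower M (- / 4) * sqrt X.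
Proof.
  intros HM HX. rewrite Rpow14 by auto. unfold CKM, K0.
  assert (Hs2 : 0 < sqrt 2) by (apply sqrt_lt_R0; lra).
  assert (HsM : 0 < sqrt M) by (apply sqrt_lt_R0; lra).
  assert (HssM : 0 < sqrt (sqrt M)) by (apply sqrt_lt_R0; lra).
  rewrite sqrt_div_alt by lra.
  replace (4 * (5 * (48 / (sqrt M / sqrt 2))) * (3 * X)) with ((2880 * sqrt 2 * X) / sqrt M) by (field; lra).
  rewrite sqrt_div_alt by lra. rewrite sqrt_mult_alt by lra. field. lra.
Qed.

Lemma CT_diff s T w wt : 0 <= s -> in_CTl2s s T w -> in_CTl2s s T wt ->
  in_CTl2s s T (fun t n => Csub (w t n) (wt t n)).
Proof.
  intros Hs [H1 H2] [H3 H4]. split.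
  - intros t Ht. exact (proj1 (l2s_tri s (w t) (wt t) _ Hs (H1 t Ht) (H3 t Ht) (fun m => Cmod_sub _ _))).
  - intros t Ht eps He.
    destruct (H2 t Ht (eps/2) ltac:(lra)) as [e1 [He1 Hw1]].
    destruct (H4 t Ht (eps/2) ltac:(lra)) as [e2 [He2 Hw2]].
    exists (Rmin e1 e2). split. apply Rmin_pos; auto.
    intros t' Ht' Hd.
    assert (Hd1 : Rabs (t - t') < e1) by (eapply Rlt_le_trans; [exact Hd| apply Rmin_l]).
    assert (Hd2 : Rabs (t - t') < e2) by (eapply Rlt_le_trans; [exact Hd| apply Rmin_r]).
    specialize (Hw1 t' Ht' Hd1). specialize (Hw2 t' Ht' Hd2).
    assert (Hf : in_l2s s (fun n => Csub (w t n) (w t' n)))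
      by exact (proj1 (l2s_tri s (w t) (w t') _ Hs (H1 t Ht) (H1 t' Ht') (fun m => Cmod_sub _ _))).
    assert (Hg : in_l2s s (fun n => Csub (wt t n) (wt t' n)))
      by exact (proj1 (l2s_tri s (wt t) (wt t') _ Hs (H3 t Ht) (H3 t' Ht') (fun m => Cmod_sub _ _))).
    destruct (l2s_tri s _ _ (fun n => Csub (Csub (w t n) (wt t n)) (Csub (w t' n) (wt t' n))) Hs Hf Hg) as [_ Hn].
    { intros m. replace (Csub (Csub (w t m) (wt t m)) (Csub (w t' m) (wt t' m)))
        with (Csub (Csub (w t m) (w t' m)) (Csub (wt t m) (wt t' m))).
      apply Cmod_sub.
      unfold Csub, Cadd, Copp. simpl. f_equal; ring. }
    lra.
Qed.

Lemma cube_le a b : 0 <= a -> a <= b -> a ^ 3 <= b ^ 3.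
Proof. intros. apply pow_incr; auto. Qed.

Theorem lemma3p4 (s : R) (hs : 0 < s) :
  exists (delta K : R), 0 < delta /\
    forall (M T : R) (w wt : R -> Z -> Cx),
      1 <= M -> 0 < T -> in_CTl2s s T w -> in_CTl2s s T wt ->
      CTnorm s T (calN0 M w) <= K * Rpower M (- delta) * CTnorm s T w ^ 3 /\
      CTnorm s T (fun t n => Csub (calN0 M w t n) (calN0 M wt t n))
        <= K * Rpower M (- delta)
           * (CTnorm s T w ^ 2 + CTnorm s T wt ^ 2)
           * CTnorm s T (fun t n => Csub (w t n) (wt t n)).
Proof.
  exists (/4), K0. split; [lra|]. intros M T w wt HM HT Hw Hwt.
  assert (Hs : 0 <= s) by lra.
  pose proof (CT_diff s T w wt Hs Hw Hwt) as Hd.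
  destruct (CT_bound s T w Hs ltac:(lra) Hw) as [Bw Bw0].
  destruct (CT_bound s T wt Hs ltac:(lra) Hwt) as [Bwt Bwt0].
  destruct (CT_bound s T _ Hs ltac:(lra) Hd) as [Bd Bd0].
  assert (HK : 0 <= K0 * Rpower M (- / 4)).
  { apply Rmult_le_pos. apply sqrt_pos. unfold Rpower; apply Rlt_le, exp_pos. }
  assert (HT0 : 0 <= 0 <= T) by lra.
  split.
  - unfold CTnorm at 1. apply Rlub_le; [| exists (l2s_norm s (calN0 M w 0)); exists 0; split; auto].
    intros x [t [Ht ->]].
    pose proof (proj1 Hw t Ht) as Hwt0.
    set (nw := l2s_norm s (w t)).
    assert (Hnw : 0 <= nw) by apply l2s_norm_nonneg.
    eapply Rle_trans. apply l2s_norm_le. apply (estA s M w t Hs HM Hwt0).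
    fold nw. rewrite CKM_sqrt by (auto; nra).
    replace (nw ^ 2 * nw ^ 2 * nw ^ 2 + 0 * 0 * 0 + 0 * 0 * 0) with ((nw ^ 3) ^ 2) by ring.
    rewrite sqrt_pow2 by (apply pow_le; auto).
    apply Rmult_le_compat_l; auto. apply cube_le; auto. apply Bw; auto.
  - unfold CTnorm at 1. apply Rlub_le; [| eexists; exists 0; split; eauto].
    intros x [t [Ht ->]].
    pose proof (proj1 Hw t Ht) as Hw0. pose proof (proj1 Hwt t Ht) as Hwt0. pose proof (proj1 Hd t Ht) as Hd0.
    simpl in Hd0.
    eapply Rle_trans. apply l2s_norm_le. apply (estB s M w wt t Hs HM Hw0 Hwt0 Hd0).
    set (a := l2s_norm s (w t)). set (b := l2s_norm s (wt t)). set (c := l2s_norm s (fun k => Csub (w t k) (wt t k))).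
    assert (Ha : 0 <= a) by apply l2s_norm_nonneg. assert (Hb : 0 <= b) by apply l2s_norm_nonneg.
    assert (Hc : 0 <= c) by apply l2s_norm_nonneg.
    assert (HX : 0 <= c ^ 2 * a ^ 2 * a ^ 2 + b ^ 2 * c ^ 2 * a ^ 2 + b ^ 2 * b ^ 2 * c ^ 2).
    { assert (0 <= c^2*a^2) by nra. assert (0 <= b^2*c^2) by nra. nra. }
    rewrite CKM_sqrt by auto.
    assert (Hsq : sqrt (c ^ 2 * a ^ 2 * a ^ 2 + b ^ 2 * c ^ 2 * a ^ 2 + b ^ 2 * b ^ 2 * c ^ 2) <= (a^2 + b^2) * c).
    { rewrite <- (sqrt_pow2 ((a^2+b^2)*c)) by (apply Rmult_le_pos; nra).
      apply sqrt_le_1_alt. assert (0 <= a^2*b^2*c^2) by (assert (0 <= a^2*b^2) by nra; nra). nra. }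
    rewrite (Rmult_assoc (K0 * Rpower M (- / 4)) (CTnorm s T w ^ 2 + CTnorm s T wt ^ 2)).
    apply Rmult_le_compat_l; auto.
    eapply Rle_trans; [exact Hsq|].
    assert (a <= CTnorm s T w) by (apply Bw; auto).
    assert (b <= CTnorm s T wt) by (apply Bwt; auto).
    assert (c <= CTnorm s T (fun t n => Csub (w t n) (wt t n))) by (apply (Bd t Ht)).
    apply Rmult_le_compat; try nra.
Qed.
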